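(* Let $H$ be a real Hilbert space. The set $\mathcal A=\{(B,V)\in\mathcal B_s(H)\times\mathcal G(H): B|_{V\times V}\text{ is essentially positive}\}$ is open in $\mathcal B_s(H)\times\mathcal G(H)$; the map $\mathcal A\ni(B,V)\mapsto\mathrm n_-(B|_{V\times V})+\dim\mathrm{Ker}(B|_{V\times V})\in\mathbb N$ is upper semicontinuous; and the map $\mathcal A\ni(B,V)\mapsto\mathrm n_-(B|_{V\times V})\in\mathbb N$ is lower semicontinuous.
   Context: $\mathcal B_s(H)$ is the space of bounded symmetric bilinear forms on $H$, topologized via the operator norm of the representing self-adjoint operators ($B=\langle T\cdot,\cdot\rangle$). $\mathcal G(H)$ is the set of closed subspaces of $H$ with the metric $\mathrm{dist}(X,Y)=\|P_X-P_Y\|$, $P_Z$ the orthogonal projection onto $Z$. A bounded symmetric form on a closed subspace $V$ (a Hilbert space) is essentially positive if its representing operator is $P+K$ with $P$ a self-adjoint isomorphism with $\langle Px,x\rangle>0$ for $x\neq0$ and $K$ compact. $\mathrm n_-$ is the maximal dimension of a negative definite subspace; $\mathrm{Ker}(B|_{V\times V})=\{x\in V: B(x,y)=0\ \forall y\in V\}$. *)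

(* Defs.v *)
From Stdlib Require Import Reals.
Open Scope R_scope.

Record RHilbert := {
  hcar :> Type;
  hzero : hcar;
  hadd : hcar -> hcar -> hcar;
  hopp : hcar -> hcar;
  hscal : R -> hcar -> hcar;
  hinner : hcar -> hcar -> R;
  hadd_assoc : forall x y z, hadd x (hadd y z) = hadd (hadd x y) z;
  hadd_comm : forall x y, hadd x y = hadd y x;
  hadd_zero : forall x, hadd hzero x = x;
  hadd_opp : forall x, hadd (hopp x) x = hzero;
  hscal_one : forall x, hscal 1 x = x;
  hscal_assoc : forall a b x, hscal a (hscal b x) = hscal (a * b) x;
  hscal_distr_v : forall a x y, hscal a (hadd x y) = hadd (hscal a x) (hscal a y);
  hscal_distr_s : forall a b x, hscal (a + b) x = hadd (hscal a x) (hscal b x);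
  hinner_sym : forall x y, hinner x y = hinner y x;
  hinner_add : forall x y z, hinner (hadd x y) z = hinner x z + hinner y z;
  hinner_scal : forall a x y, hinner (hscal a x) y = a * hinner x y;
  hinner_pos : forall x, 0 <= hinner x x;
  hinner_def : forall x, hinner x x = 0 -> x = hzero;
  hcomplete : forall u : nat -> hcar,
    (forall eps, 0 < eps -> exists N, forall m n, (N <= m)%nat -> (N <= n)%nat ->
        sqrt (hinner (hadd (u m) (hopp (u n))) (hadd (u m) (hopp (u n)))) < eps) ->
    exists l, forall eps, 0 < eps -> exists N, forall n, (N <= n)%nat ->
        sqrt (hinner (hadd (u n) (hopp l)) (hadd (u n) (hopp l))) < eps
}.

Section Hilb.
Context {E : RHilbert}.

Definition hsub (x y : E) : E := hadd E x (hopp E y).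
Definition hnorm (x : E) : R := sqrt (hinner E x x).

Definition converges (u : nat -> E) (l : E) : Prop :=
  forall eps, 0 < eps -> exists N, forall n, (N <= n)%nat -> hnorm (hsub (u n) l) < eps.

Definition is_linear (f : E -> E) : Prop :=
  (forall x y, f (hadd E x y) = hadd E (f x) (f y)) /\
  (forall a x, f (hscal E a x) = hscal E a (f x)).
Definition bounded_op (f : E -> E) : Prop :=
  is_linear f /\ exists C, forall x, hnorm (f x) <= C * hnorm x.

(** B_s(H): bounded symmetric forms B = <T.,.>, represented by their
    self-adjoint bounded operator T. *)
Definition is_Bs (T : E -> E) : Prop :=
  bounded_op T /\ forall x y, hinner E (T x) y = hinner E x (T y).

Definition opnorm_lt (A : E -> E) (eps : R) : Prop :=
  exists c, c < eps /\ forall x, hnorm (A x) <= c * hnorm x.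

Definition closed_subspace (V : E -> Prop) : Prop :=
  V (hzero E) /\ (forall x y, V x -> V y -> V (hadd E x y)) /\
  (forall a x, V x -> V (hscal E a x)) /\
  (forall u l, (forall n, V (u n)) -> converges u l -> V l).

Definition is_orth_proj (V : E -> Prop) (p : E -> E) : Prop :=
  forall x, V (p x) /\ forall y, V y -> hinner E (hsub x (p x)) y = 0.

Definition gdist_lt (V V' : E -> Prop) (eps : R) : Prop :=
  exists p p', is_orth_proj V p /\ is_orth_proj V' p' /\
    opnorm_lt (fun x => hsub (p x) (p' x)) eps.

Definition compact_on (V : E -> Prop) (K : E -> E) : Prop :=
  forall u : nat -> E, (forall n, V (u n)) -> (exists M, forall n, hnorm (u n) <= M) ->
    exists phi : nat -> nat, (forall n, (phi n < phi (S n))%nat) /\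
      exists l, converges (fun n => K (u (phi n))) l.

(** B|_{VxV} (B = <T.,.>) is essentially positive: its representing operator
    on V is P + K, P a positive self-adjoint isomorphism of V, K compact. *)
Definition ess_positive (T : E -> E) (V : E -> Prop) : Prop :=
  exists P K : E -> E,
    bounded_op P /\ bounded_op K /\
    (forall x, V x -> V (P x)) /\ (forall x, V x -> V (K x)) /\
    (forall x y, V x -> V y -> hinner E (P x) y = hinner E x (P y)) /\
    (exists Q, bounded_op Q /\ (forall x, V x -> V (Q x)) /\
       (forall x, V x -> P (Q x) = x /\ Q (P x) = x)) /\
    (forall x, V x -> x <> hzero E -> 0 < hinner E (P x) x) /\
    compact_on V K /\
    (forall x y, V x -> V y -> hinner E (T x) y = hinner E (hadd E (P x) (K x)) y).

Definition in_A (T : E -> E) (V : E -> Prop) : Prop :=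
  is_Bs T /\ closed_subspace V /\ ess_positive T V.

Fixpoint lincomb (v : nat -> E) (c : nat -> R) (k : nat) : E :=
  match k with
  | O => hzero E
  | S k' => hadd E (lincomb v c k') (hscal E (c k') (v k'))
  end.

(** n_-(B|_{VxV}) >= k: there is a k-dimensional negative definite subspace
    of V (spanned by v_0..v_{k-1}; negative definiteness forces independence) *)
Definition neg_dim_ge (T : E -> E) (V : E -> Prop) (k : nat) : Prop :=
  exists v : nat -> E, (forall i, (i < k)%nat -> V (v i)) /\
    forall c : nat -> R, (exists i, (i < k)%nat /\ c i <> 0) ->
      hinner E (T (lincomb v c k)) (lincomb v c k) < 0.
Definition n_minus_eq (T : E -> E) (V : E -> Prop) (n : nat) : Prop :=
  neg_dim_ge T V n /\ ~ neg_dim_ge T V (S n).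

Definition in_ker (T : E -> E) (V : E -> Prop) (x : E) : Prop :=
  V x /\ forall y, V y -> hinner E (T x) y = 0.
Definition ker_dim_ge (T : E -> E) (V : E -> Prop) (k : nat) : Prop :=
  exists v : nat -> E, (forall i, (i < k)%nat -> in_ker T V (v i)) /\
    forall c : nat -> R, lincomb v c k = hzero E -> forall i, (i < k)%nat -> c i = 0.
Definition ker_dim_eq (T : E -> E) (V : E -> Prop) (d : nat) : Prop :=
  ker_dim_ge T V d /\ ~ ker_dim_ge T V (S d).

End Hilb.

(* Main.v *)
Require Import Defs.
From Stdlib Require Import Reals Lra Lia Psatz List Classical ClassicalEpsilon.
Open Scope R_scope.

Section Basics.
Context {E : RHilbert}.

Notation ip := (hinner E).
Notation add := (hadd E).
Notation sc := (hscal E).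
Notation op := (hopp E).
Notation z0 := (hzero E).
Definition nn (x : E) := ip x x.

Lemma add0r (x : E) : add x z0 = x.
Proof. rewrite hadd_comm; apply hadd_zero. Qed.

Lemma ip0l (y : E) : ip z0 y = 0.
Proof.
  assert (H := hinner_add E z0 z0 y). rewrite hadd_zero in H. lra.
Qed.
Lemma ip_addl x y z : ip (add x y) z = ip x z + ip y z.
Proof. apply hinner_add. Qed.
Lemma ip_addr x y z : ip z (add x y) = ip z x + ip z y.
Proof. rewrite !(hinner_sym E z). apply hinner_add. Qed.
Lemma ip_scl a x y : ip (sc a x) y = a * ip x y.
Proof. apply hinner_scal. Qed.
Lemma ip_scr a x y : ip y (sc a x) = a * ip y x.
Proof. rewrite !(hinner_sym E y). apply hinner_scal. Qed.
Lemma ip0r (y : E) : ip y z0 = 0.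
Proof. rewrite hinner_sym; apply ip0l. Qed.
Lemma ip_oppl x y : ip (op x) y = - ip x y.
Proof.
  assert (H := hinner_add E (op x) x y). rewrite hadd_opp, ip0l in H. lra.
Qed.
Lemma ip_oppr x y : ip y (op x) = - ip y x.
Proof. rewrite !(hinner_sym E y). apply ip_oppl. Qed.
Lemma ip_subl x y z : ip (hsub x y) z = ip x z - ip y z.
Proof. unfold hsub. rewrite ip_addl, ip_oppl. ring. Qed.
Lemma ip_subr x y z : ip z (hsub x y) = ip z x - ip z y.
Proof. unfold hsub. rewrite ip_addr, ip_oppr. ring. Qed.

Lemma vec_ext (x y : E) : (forall z, ip x z = ip y z) -> x = y.
Proof.
  intro H.
  assert (hsub x y = z0).
  { apply hinner_def. rewrite ip_subl, !H. ring. }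
  unfold hsub in H0.
  rewrite <- (add0r x), <- (hadd_opp E y), hadd_assoc, H0, hadd_zero. reflexivity.
Qed.

End Basics.

Ltac ipsimpl := repeat (rewrite ?ip_addl, ?ip_addr, ?ip_scl, ?ip_scr, ?ip_oppl, ?ip_oppr,
   ?ip_subl, ?ip_subr, ?ip0l, ?ip0r).
Ltac vecsolve := apply vec_ext; intro; ipsimpl; ring.
Ltac ipsimpl_in H := repeat (rewrite ?ip_addl, ?ip_addr, ?ip_scl, ?ip_scr, ?ip_oppl, ?ip_oppr,
   ?ip_subl, ?ip_subr, ?ip0l, ?ip0r in H).

Lemma quad_disc (a b c : R) : 0 <= c -> (forall t, 0 <= a - 2 * t * b + t * t * c) -> b * b <= a * c.
Proof.
  intros Hc H.
  destruct (Rle_lt_or_eq_dec 0 c Hc) as [Hc'|Hc'].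
  - specialize (H (b / c)).
    assert (a - 2 * (b/c) * b + (b/c)*(b/c)*c = (a*c - b*b)/c) by (field; lra).
    rewrite H0 in H.
    assert (0 <= a*c - b*b).
    { apply Rmult_le_reg_r with (/c). apply Rinv_0_lt_compat; lra.
      rewrite Rmult_0_l. exact H. }
    lra.
  - subst c. destruct (Req_dec b 0). subst; lra.
    specialize (H ((a+1)/(2*b))).
    assert (a - 2 * ((a+1)/(2*b)) * b + ((a+1)/(2*b))*((a+1)/(2*b))*0 = -1) by (field; lra).
    lra.
Qed.

Section Norms.
Context {E : RHilbert}.
Notation ip := (hinner E).
Notation add := (hadd E).
Notation sc := (hscal E).
Notation op := (hopp E).
Notation z0 := (hzero E).

Lemma nn_ge0 (x : E) : 0 <= nn x.
Proof. apply hinner_pos. Qed.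
Lemma hnorm_ge0 (x : E) : 0 <= hnorm x.
Proof. apply sqrt_pos. Qed.
Lemma hnorm_sq (x : E) : hnorm x * hnorm x = nn x.
Proof. unfold hnorm. apply sqrt_sqrt. apply nn_ge0. Qed.
Lemma nn_eq0 (x : E) : nn x = 0 -> x = z0.
Proof. apply hinner_def. Qed.
Lemma hnorm_eq0 (x : E) : hnorm x = 0 -> x = z0.
Proof. intro H. apply nn_eq0. rewrite <- hnorm_sq, H. ring. Qed.
Lemma nn0 : nn (hzero E) = 0.
Proof. unfold nn. apply ip0l. Qed.
Lemma hnorm0 : hnorm (hzero E) = 0.
Proof. unfold hnorm. rewrite ip0l. apply sqrt_0. Qed.

Lemma cs_sq (x y : E) : ip x y * ip x y <= nn x * nn y.
Proof.
  apply quad_disc. apply nn_ge0.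
  intro t. assert (H := nn_ge0 (hsub x (sc t y))). unfold nn in *. ipsimpl_in H.
  rewrite (hinner_sym E y x) in H. nra.
Qed.

Lemma sq_le_le (a b : R) : 0 <= b -> a * a <= b * b -> a <= b.
Proof. intros. nra. Qed.

Lemma cs (x y : E) : Rabs (ip x y) <= hnorm x * hnorm y.
Proof.
  apply sq_le_le. apply Rmult_le_pos; apply hnorm_ge0.
  rewrite <- Rabs_mult. rewrite Rabs_right by (apply Rle_ge; nra).
  replace (hnorm x * hnorm y * (hnorm x * hnorm y)) with ((hnorm x * hnorm x) * (hnorm y * hnorm y)) by ring.
  rewrite !hnorm_sq. apply cs_sq.
Qed.
Lemma cs1 (x y : E) : ip x y <= hnorm x * hnorm y.
Proof. assert (H := cs x y). assert (H2 := Rle_abs (ip x y)). lra. Qed.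
Lemma cs2 (x y : E) : - (hnorm x * hnorm y) <= ip x y.
Proof. assert (H := cs x y). assert (H2 := Rle_abs (- ip x y)). rewrite Rabs_Ropp in H2. lra. Qed.

Lemma hnorm_tri (x y : E) : hnorm (add x y) <= hnorm x + hnorm y.
Proof.
  apply sq_le_le. generalize (hnorm_ge0 x) (hnorm_ge0 y); lra.
  rewrite hnorm_sq. unfold nn. ipsimpl.
  assert (H := cs1 x y). rewrite (hinner_sym E y x).
  assert (Hx := hnorm_sq x). assert (Hy := hnorm_sq y). unfold nn in *. nra.
Qed.

Lemma nn_sc a (x : E) : nn (sc a x) = a * a * nn x.
Proof. unfold nn; ipsimpl; ring. Qed.
Lemma hnorm_sc a (x : E) : hnorm (sc a x) = Rabs a * hnorm x.
Proof.
  unfold hnorm. change (hinner E (sc a x) (sc a x)) with (nn (sc a x)).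
  rewrite nn_sc. rewrite sqrt_mult_alt.
  change (a*a) with (Rsqr a). rewrite sqrt_Rsqr_abs. reflexivity.
  apply Rle_0_sqr. 
Qed.
Lemma hnorm_opp (x : E) : hnorm (op x) = hnorm x.
Proof. unfold hnorm. ipsimpl. f_equal. ring. Qed.
Lemma hnorm_subC (x y : E) : hnorm (hsub x y) = hnorm (hsub y x).
Proof. unfold hnorm. ipsimpl. f_equal. rewrite (hinner_sym E x y). ring. Qed.
Lemma hnorm_tri_sub (x y z : E) : hnorm (hsub x z) <= hnorm (hsub x y) + hnorm (hsub y z).
Proof.
  replace (hsub x z) with (add (hsub x y) (hsub y z)) by vecsolve. apply hnorm_tri.
Qed.
Lemma hnorm_sub_le (x y : E) : hnorm (hsub x y) <= hnorm x + hnorm y.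
Proof. unfold hsub. rewrite <- (hnorm_opp y). apply hnorm_tri. Qed.
Lemma hnorm_rev (x y : E) : hnorm x - hnorm y <= hnorm (hsub x y).
Proof.
  assert (H := hnorm_tri (hsub x y) y).
  replace (add (hsub x y) y) with x in H by vecsolve. lra.
Qed.

End Norms.

Fixpoint rsum (f : nat -> R) (k : nat) : R :=
  match k with O => 0 | S k' => rsum f k' + f k' end.

Section Lin.
Context {E : RHilbert}.
Notation ip := (hinner E).
Notation add := (hadd E).
Notation sc := (hscal E).
Notation op := (hopp E).
Notation z0 := (hzero E).

Lemma lin_zero (f : E -> E) : is_linear f -> f z0 = z0.
Proof.
  intros [Ha Hs]. assert (H := Ha z0 z0). rewrite hadd_zero in H.
  apply vec_ext; intro z. assert (H1 := f_equal (fun w => ip w z) H). simpl in H1.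
  ipsimpl_in H1. ipsimpl. lra.
Qed.
Lemma lin_opp (f : E -> E) x : is_linear f -> f (op x) = op (f x).
Proof.
  intros Hl. assert (Hs := proj2 Hl). replace (op x) with (sc (-1) x) by vecsolve.
  rewrite Hs. vecsolve.
Qed.
Lemma lin_sub (f : E -> E) x y : is_linear f -> f (hsub x y) = hsub (f x) (f y).
Proof.
  intros Hl. unfold hsub. rewrite (proj1 Hl), lin_opp; auto.
Qed.
Lemma lin_add (f : E -> E) x y : is_linear f -> f (add x y) = add (f x) (f y).
Proof. intros Hl. apply (proj1 Hl). Qed.
Lemma lin_sc (f : E -> E) a x : is_linear f -> f (sc a x) = sc a (f x).
Proof. intros Hl. apply (proj2 Hl). Qed.

Lemma bnd (f : E -> E) : bounded_op f -> exists M, 0 <= M /\ forall x, hnorm (f x) <= M * hnorm x.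
Proof.
  intros [_ [C HC]]. exists (Rmax C 0). split. apply Rmax_r.
  intro x. specialize (HC x). assert (H0 := hnorm_ge0 x).
  assert (C * hnorm x <= Rmax C 0 * hnorm x). apply Rmult_le_compat_r; auto. apply Rmax_l. lra.
Qed.

Lemma opn (A : E -> E) eps : opnorm_lt A eps -> forall x, hnorm (A x) <= eps * hnorm x.
Proof.
  intros [c [Hc H]] x. specialize (H x). assert (H0 := hnorm_ge0 x). nra.
Qed.

Lemma lin_comp (f g : E -> E) : is_linear f -> is_linear g -> is_linear (fun x => f (g x)).
Proof.
  intros Hf Hg. split; intros; rewrite ?lin_add, ?lin_sc; auto.
Qed.
Lemma bnd_comp (f g : E -> E) : bounded_op f -> bounded_op g -> bounded_op (fun x => f (g x)).
Proof.
  intros Hf Hg. split. apply lin_comp; [apply Hf|apply Hg].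
  destruct (bnd f Hf) as [M1 [HM1 H1]]. destruct (bnd g Hg) as [M2 [HM2 H2]].
  exists (M1 * M2). intro x. eapply Rle_trans. apply H1.
  specialize (H2 x). rewrite Rmult_assoc. apply Rmult_le_compat_l; auto.
Qed.
Lemma bnd_sub (f g : E -> E) : bounded_op f -> bounded_op g -> bounded_op (fun x => hsub (f x) (g x)).
Proof.
  intros Hf Hg. split. split; intros.
  rewrite !lin_add by (apply Hf || apply Hg). vecsolve.
  rewrite !lin_sc by (apply Hf || apply Hg). vecsolve.
  destruct (bnd f Hf) as [M1 [HM1 H1]]. destruct (bnd g Hg) as [M2 [HM2 H2]].
  exists (M1 + M2). intro x. eapply Rle_trans. apply hnorm_sub_le.
  specialize (H1 x); specialize (H2 x). lra.
Qed.
Lemma bnd_add (f g : E -> E) : bounded_op f -> bounded_op g -> bounded_op (fun x => add (f x) (g x)).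
Proof.
  intros Hf Hg. split. split; intros.
  rewrite !lin_add by (apply Hf || apply Hg). vecsolve.
  rewrite !lin_sc by (apply Hf || apply Hg). vecsolve.
  destruct (bnd f Hf) as [M1 [HM1 H1]]. destruct (bnd g Hg) as [M2 [HM2 H2]].
  exists (M1 + M2). intro x. eapply Rle_trans. apply hnorm_tri.
  specialize (H1 x); specialize (H2 x). lra.
Qed.

Lemma lc_ip (v : nat -> E) c k y : ip (lincomb v c k) y = rsum (fun i => c i * ip (v i) y) k.
Proof. induction k; simpl. apply ip0l. ipsimpl. rewrite IHk. ring. Qed.
Lemma lc_ext (v v' : nat -> E) c c' k : (forall i, (i < k)%nat -> v i = v' i) ->
  (forall i, (i < k)%nat -> c i = c' i) -> lincomb v c k = lincomb v' c' k.
Proof.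
  induction k; simpl; intros; auto. rewrite IHk, H, H0; auto.
Qed.
Lemma lc_lin (f : E -> E) v c k : is_linear f -> f (lincomb v c k) = lincomb (fun i => f (v i)) c k.
Proof.
  intro Hl. induction k; simpl. apply lin_zero; auto.
  rewrite lin_add, lin_sc, IHk; auto.
Qed.
Definition subspace (V : E -> Prop) : Prop :=
  V z0 /\ (forall x y, V x -> V y -> V (add x y)) /\ (forall a x, V x -> V (sc a x)).
Lemma cs_sub V : closed_subspace V -> subspace V.
Proof. intros [? [? [? _]]]. repeat split; auto. Qed.
Lemma sub_sub V x y : subspace V -> V x -> V y -> V (hsub x y).
Proof.
  intros [H0 [Ha Hs]] Hx Hy. replace (hsub x y) with (add x (sc (-1) y)) by vecsolve. auto.
Qed.
Lemma lc_sub V v c k : subspace V -> (forall i, (i < k)%nat -> V (v i)) -> V (lincomb v c k).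
Proof.
  intros HV Hv. destruct HV as [H0 [Ha Hs]]. induction k; simpl; auto.
  apply Ha. apply IHk. intros; apply Hv; lia. apply Hs, Hv; lia.
Qed.
Lemma lc_zero v c k : (forall i, (i < k)%nat -> c i = 0) -> lincomb v c k = z0.
Proof.
  induction k; simpl; intros; auto. rewrite IHk, H by auto. vecsolve.
Qed.
Lemma lc_app v c n m : lincomb v c (n + m) =
  add (lincomb v c n) (lincomb (fun i => v (n + i)%nat) (fun i => c (n + i)%nat) m).
Proof.
  induction m; simpl. rewrite Nat.add_0_r. vecsolve.
  rewrite Nat.add_succ_r. simpl. rewrite IHm. vecsolve.
Qed.
Lemma lc_piv v u a c k : lincomb (fun i => hsub (v i) (sc (a i) u)) c k =
  hsub (lincomb v c k) (sc (rsum (fun i => c i * a i) k) u).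
Proof. induction k; simpl. vecsolve. rewrite IHk. vecsolve. Qed.
Lemma lc_scal v c r k : lincomb v (fun i => r * c i) k = sc r (lincomb v c k).
Proof. induction k; simpl. vecsolve. rewrite IHk. vecsolve. Qed.
Lemma lc_addc v c c' k : lincomb v (fun i => c i + c' i) k = add (lincomb v c k) (lincomb v c' k).
Proof. induction k; simpl. vecsolve. rewrite IHk. vecsolve. Qed.

Section Proj.
Variable V : E -> Prop.
Variable p : E -> E.
Hypothesis HV : subspace V.
Hypothesis Hp : is_orth_proj V p.

Lemma pr_in x : V (p x). Proof. apply Hp. Qed.
Lemma pr_orth x y : V y -> ip (hsub x (p x)) y = 0. Proof. apply Hp. Qed.
Lemma pr_uniq x a : V a -> (forall y, V y -> ip (hsub x a) y = 0) -> p x = a.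
Proof.
  intros Ha H. apply vec_ext; intro z.
  assert (hsub (p x) a = z0).
  { apply nn_eq0. unfold nn. assert (Hv : V (hsub (p x) a)) by (apply sub_sub; auto; apply pr_in).
    replace (hsub (p x) a) with (hsub (hsub x a) (hsub x (p x))) at 1 by vecsolve.
    rewrite ip_subl, H, pr_orth; auto. ring. }
  assert (H1 := f_equal (fun w => ip w z) H0). simpl in H1. ipsimpl_in H1. lra.
Qed.
Lemma pr_id x : V x -> p x = x.
Proof. intro Hx. apply pr_uniq; auto. intros. unfold hsub. ipsimpl. ring. Qed.
Lemma pr_lin : is_linear p.
Proof.
  split; intros.
  - apply pr_uniq. destruct HV as [_ [Ha _]]. apply Ha; apply pr_in.
    intros w Hw. replace (hsub (add x y) (add (p x) (p y))) with (add (hsub x (p x)) (hsub y (p y))) by vecsolve.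
    rewrite ip_addl, !pr_orth; auto. ring.
  - apply pr_uniq. destruct HV as [_ [_ Hs]]. apply Hs; apply pr_in.
    intros w Hw. replace (hsub (sc a x) (sc a (p x))) with (sc a (hsub x (p x))) by vecsolve.
    rewrite ip_scl, pr_orth; auto. ring.
Qed.
Lemma pr_sa x y : ip (p x) y = ip x (p y).
Proof.
  assert (H1 := pr_orth y (p x) (pr_in x)).
  assert (H2 := pr_orth x (p y) (pr_in y)).
  ipsimpl_in H1. ipsimpl_in H2. rewrite (hinner_sym E y (p x)), (hinner_sym E (p y) (p x)) in H1. lra.
Qed.
Lemma pr_nn x : nn x = nn (p x) + nn (hsub x (p x)).
Proof.
  assert (H1 := pr_orth x (p x) (pr_in x)). unfold nn. ipsimpl_in H1. ipsimpl.
  rewrite (hinner_sym E (p x) x). lra.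
Qed.
Lemma pr_norm x : hnorm (p x) <= hnorm x.
Proof.
  apply sq_le_le. apply hnorm_ge0. rewrite !hnorm_sq, (pr_nn x). generalize (nn_ge0 (hsub x (p x))). lra.
Qed.
Lemma pr_bnd : bounded_op p.
Proof. split. apply pr_lin. exists 1. intro. rewrite Rmult_1_l. apply pr_norm. Qed.
End Proj.

Lemma cauchy_conv (u : nat -> E) : (forall eps, 0 < eps -> exists N, forall m n, (N <= m)%nat -> (N <= n)%nat ->
   hnorm (hsub (u m) (u n)) < eps) -> exists l, converges u l.
Proof. intro H. apply (hcomplete E u H). Qed.

End Lin.

Lemma rsum_zero f k : (forall i, (i < k)%nat -> f i = 0) -> rsum f k = 0.
Proof. induction k; simpl; intros; auto. rewrite IHk, H; auto. ring. Qed.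
Lemma rsum_ext f g k : (forall i, (i < k)%nat -> f i = g i) -> rsum f k = rsum g k.
Proof. induction k; simpl; intros; auto. rewrite IHk, H; auto. Qed.

Section Dim.
Context {E : RHilbert}.
Notation ip := (hinner E).
Notation add := (hadd E).
Notation sc := (hscal E).
Notation op := (hopp E).
Notation z0 := (hzero E).

Lemma dim_lemma : forall k (ys : list E) (v : nat -> E), (length ys < k)%nat ->
  exists c : nat -> R, (exists i, (i < k)%nat /\ c i <> 0) /\
    forall y, In y ys -> ip (lincomb v c k) y = 0.
Proof.
  induction k; intros ys v Hl. lia.
  destruct (classic (forall y, In y ys -> ip (v k) y = 0)) as [HA|HB].
  - exists (fun i => if Nat.eqb i k then 1 else 0). split.
    exists k. split. lia. rewrite Nat.eqb_refl. lra.
    intros y Hy. simpl. rewrite lc_zero. rewrite Nat.eqb_refl. ipsimpl. rewrite HA; auto. ring.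
    intros i Hi. destruct (Nat.eqb_spec i k). lia. auto.
  - apply not_all_ex_not in HB. destruct HB as [y0 HB].
    apply imply_to_and in HB. destruct HB as [Hin Hb].
    apply in_split in Hin. destruct Hin as [l1 [l2 Hys]].
    set (b := ip (v k) y0).
    set (v' := fun i => hsub (v i) (sc (ip (v i) y0 / b) (v k))).
    destruct (IHk (l1 ++ l2) v') as [c' [[i0 [Hi0 Hc0]] Hc']].
    { subst ys. rewrite length_app in *. simpl in Hl. lia. }
    set (s := rsum (fun i => c' i * (ip (v i) y0 / b)) k).
    exists (fun i => if Nat.ltb i k then c' i else - s). split.
    + exists i0. split. lia. replace (Nat.ltb i0 k) with true. auto. symmetry; apply Nat.ltb_lt; auto.
    + assert (Heq : lincomb v (fun i => if Nat.ltb i k then c' i else - s) (S k) = lincomb v' c' k).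
      { simpl. unfold v'. rewrite lc_piv. replace (Nat.ltb k k) with false by (symmetry; apply Nat.ltb_irrefl).
        rewrite (lc_ext v v _ c' k); auto. fold s. vecsolve.
        intros i Hi. replace (Nat.ltb i k) with true; auto. symmetry; apply Nat.ltb_lt; auto. }
      rewrite Heq. intros y Hy. subst ys.
      apply in_app_or in Hy. destruct Hy as [Hy|[Hy|Hy]].
      * apply Hc'. apply in_or_app; auto.
      * subst y. rewrite lc_ip. apply rsum_zero. intros i Hi. unfold v'. ipsimpl. fold b.
        field_simplify. ring. auto.
      * apply Hc'. apply in_or_app; auto.
Qed.
End Dim.

Section Coer.
Context {E : RHilbert}.
Notation ip := (hinner E).
Notation add := (hadd E).
Notation sc := (hscal E).
Notation op := (hopp E).
Notation z0 := (hzero E).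

Lemma semi_cs (V : E -> Prop) (P : E -> E) : subspace V -> is_linear P ->
  (forall x y, V x -> V y -> ip (P x) y = ip x (P y)) ->
  (forall x, V x -> 0 <= ip (P x) x) ->
  forall x y, V x -> V y -> ip (P x) y * ip (P x) y <= ip (P x) x * ip (P y) y.
Proof.
  intros HV Hl Hs Hp x y Hx Hy. apply quad_disc. apply Hp; auto.
  intro t. assert (Hv : V (hsub x (sc t y))). apply sub_sub; auto. apply HV; auto.
  specialize (Hp _ Hv). rewrite lin_sub, lin_sc in Hp; auto. ipsimpl_in Hp.
  rewrite (Hs y x) in Hp; auto. rewrite (hinner_sym E y (P x)) in Hp. lra.
Qed.

Lemma sq_le (a b : R) : 0 <= a -> a <= b -> a * a <= b * b.
Proof. intros; nra. Qed.

Lemma P_coer (V : E -> Prop) (P Q : E -> E) : subspace V -> bounded_op P -> bounded_op Q ->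
  (forall x, V x -> V (P x)) ->
  (forall x y, V x -> V y -> ip (P x) y = ip x (P y)) ->
  (forall x, V x -> x <> z0 -> 0 < ip (P x) x) ->
  (forall x, V x -> Q (P x) = x) ->
  exists alpha, 0 < alpha /\ forall x, V x -> alpha * nn x <= ip (P x) x.
Proof.
  intros HV HP HQ HPV Hs Hpos HQP.
  assert (Hp0 : forall x, V x -> 0 <= ip (P x) x).
  { intros x Hx. destruct (classic (x = z0)). subst. rewrite lin_zero. rewrite ip0l; lra. apply HP.
    apply Rlt_le; auto. }
  destruct (bnd P HP) as [M [HM HMb]]. destruct (bnd Q HQ) as [N [HN HNb]].
  exists (/ (N * N * M + 1)). split. apply Rinv_0_lt_compat. nra.
  intros x Hx.
  assert (H1 := semi_cs V P HV (proj1 HP) Hs Hp0 x (P x) Hx (HPV x Hx)).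
  assert (H2 : ip (P (P x)) (P x) <= M * nn (P x)).
  { eapply Rle_trans. apply cs1. rewrite <- hnorm_sq.
    assert (H3 := HMb (P x)). generalize (hnorm_ge0 (P x)) (hnorm_ge0 (P (P x))). nra. }
  assert (H4 : nn (P x) <= M * ip (P x) x).
  { change (ip (P x) (P x)) with (nn (P x)) in H1.
    assert (H0 := nn_ge0 (P x)). assert (Hb := Hp0 x Hx).
    destruct (Rle_lt_or_eq_dec 0 (nn (P x)) H0) as [Hlt|Heq]. 2: rewrite <- Heq; nra.
    assert (nn (P x) * nn (P x) <= (M * ip (P x) x) * nn (P x)) by nra. nra. }
  assert (H5 : nn x <= N * N * nn (P x)).
  { rewrite <- (HQP x Hx) at 1. rewrite <- !hnorm_sq.
    assert (H6 := HNb (P x)). generalize (hnorm_ge0 (P x)) (hnorm_ge0 (Q (P x))). nra. }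
  assert (Hb := Hp0 x Hx).
  apply Rmult_le_reg_l with (N * N * M + 1). nra.
  rewrite <- Rmult_assoc, Rinv_r by nra. nra.
Qed.

Lemma nn_lt_of (x : E) d : 0 <= d -> hnorm x < d -> nn x < d * d.
Proof. intros. rewrite <- hnorm_sq. generalize (hnorm_ge0 x). nra. Qed.

Lemma compact_constraints (V : E -> Prop) (K : E -> E) (delta : R) : subspace V -> bounded_op K ->
  (forall x, V x -> V (K x)) ->
  (forall x y, V x -> V y -> ip (K x) y = ip x (K y)) ->
  compact_on V K -> 0 < delta ->
  exists ys : list E, forall x, V x -> (forall y, In y ys -> ip x y = 0) -> hnorm (K x) <= delta * hnorm x.
Proof.
  intros HV HK HKV Hs Hc Hd.
  apply NNPP. intro Hneg.
  assert (H : forall ys : list E, exists x, V x /\ (forall y, In y ys -> ip x y = 0) /\ hnorm x = 1 /\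
             delta < hnorm (K x)).
  { intro ys. apply NNPP. intro Hn. apply Hneg. exists ys. intros x Hx Hy.
    apply Rnot_lt_le. intro Hlt.
    assert (Hx0 : x <> z0). { intro; subst. rewrite lin_zero in Hlt by apply HK. rewrite hnorm0 in Hlt. lra. }
    assert (Hnx : 0 < hnorm x). { destruct (Rle_lt_or_eq_dec _ _ (hnorm_ge0 x)); auto. exfalso; apply Hx0, hnorm_eq0; auto. }
    apply Hn. exists (sc (/ hnorm x) x). repeat split.
    - apply HV; auto.
    - intros y Hin. rewrite ip_scl, Hy; auto. ring.
    - rewrite hnorm_sc. rewrite Rabs_right. field. lra. left. apply Rinv_0_lt_compat; auto.
    - rewrite lin_sc, hnorm_sc by apply HK. rewrite Rabs_right. 2: left; apply Rinv_0_lt_compat; auto.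
      apply Rmult_lt_reg_l with (hnorm x); auto. rewrite <- Rmult_assoc, Rinv_r by lra. lra. }
  set (f := fun ys => proj1_sig (constructive_indefinite_description _ (H ys))).
  assert (Hf : forall ys, V (f ys) /\ (forall y, In y ys -> ip (f ys) y = 0) /\ hnorm (f ys) = 1 /\
             delta < hnorm (K (f ys))).
  { intro ys. unfold f. destruct (constructive_indefinite_description _ (H ys)); auto. }
  set (g := fix g (k : nat) : list E := match k with O => nil | S k' => K (K (f (g k'))) :: g k' end).
  set (x := fun k => f (g k)).
  assert (Hin : forall j k, (j < k)%nat -> In (K (K (x j))) (g k)).
  { intros j k. induction k; intros Hjk. lia. simpl. destruct (Nat.eq_dec j k). subst; left; auto.
    right; apply IHk; lia. }
  assert (Horth : forall j k, (j < k)%nat -> ip (K (x k)) (K (x j)) = 0).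
  { intros j k Hjk. rewrite Hs. apply (proj1 (proj2 (Hf (g k)))). apply Hin; auto.
    apply Hf. apply HKV, Hf. }
  assert (Hsep : forall j k, (j < k)%nat -> 2 * (delta * delta) < nn (hsub (K (x k)) (K (x j)))).
  { intros j k Hjk. unfold nn. ipsimpl. rewrite (hinner_sym E (K (x j)) (K (x k))), (Horth j k Hjk).
    assert (Ha := proj2 (proj2 (proj2 (Hf (g k))))). assert (Hb := proj2 (proj2 (proj2 (Hf (g j))))).
    fold (x k) in Ha. fold (x j) in Hb.
    assert (delta * delta < nn (K (x k))) by (rewrite <- hnorm_sq; nra).
    assert (delta * delta < nn (K (x j))) by (rewrite <- hnorm_sq; nra). unfold nn in *. lra. }
  destruct (Hc x) as [phi [Hphi [l Hl]]].
  { intro n. apply Hf. }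
  { exists 1. intro n. right. apply Hf. }
  destruct (Hl (delta / 2)) as [N HN]. lra.
  assert (H1 := HN N (le_n _)). assert (H2 := HN (S N) (le_S _ _ (le_n _))).
  assert (H3 := hnorm_tri_sub (K (x (phi (S N)))) l (K (x (phi N)))).
  rewrite (hnorm_subC l) in H3.
  assert (H4 := Hsep _ _ (Hphi N)).
  cbv beta in H1, H2.
  assert (H6 : hnorm (hsub (K (x (phi (S N)))) (K (x (phi N)))) < delta) by lra.
  assert (H5 := nn_lt_of (hsub (K (x (phi (S N)))) (K (x (phi N)))) delta ltac:(lra) H6).
  nra.
Qed.
End Coer.

Lemma find_trans (P : nat -> Prop) N : P 0%nat -> ~ P N -> exists n, P n /\ ~ P (S n).
Proof.
  intros H0. induction N; intros HN. contradiction.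
  destruct (classic (P N)). exists N; auto. auto.
Qed.

Section Setup.
Context {E : RHilbert}.
Notation ip := (hinner E).
Notation add := (hadd E).
Notation sc := (hscal E).
Notation op := (hopp E).
Notation z0 := (hzero E).

Definition q (T : E -> E) (x : E) := ip (T x) x.

Record Struct (T : E -> E) (V : E -> Prop) (P K : E -> E) (alpha : R) : Prop := {
  st_T : bounded_op T;
  st_Tsym : forall x y, ip (T x) y = ip x (T y);
  st_V : closed_subspace V;
  st_P : bounded_op P;
  st_K : bounded_op K;
  st_PV : forall x, V x -> V (P x);
  st_KV : forall x, V x -> V (K x);
  st_Psym : forall x y, V x -> V y -> ip (P x) y = ip x (P y);
  st_Ksym : forall x y, V x -> V y -> ip (K x) y = ip x (K y);
  st_Kc : compact_on V K;
  st_alpha : 0 < alpha;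
  st_coer : forall x, V x -> alpha * nn x <= ip (P x) x;
  st_dec : forall x y, V x -> V y -> ip (T x) y = ip (P x) y + ip (K x) y
}.

Lemma setup (T : E -> E) (V : E -> Prop) : in_A T V -> exists P K alpha, Struct T V P K alpha.
Proof.
  intros [[HT HTs] [HV [P [K [HP [HK [HPV [HKV [HPs [[Q [HQ [HQV HQP]]] [Hpos [Hc Hdec]]]]]]]]]]]].
  destruct (P_coer V P Q (cs_sub V HV) HP HQ HPV HPs Hpos) as [alpha [Ha Hco]].
  { intros. apply HQP; auto. }
  exists P, K, alpha. constructor; auto.
  - intros x y Hx Hy. assert (H1 := Hdec x y Hx Hy). assert (H2 := Hdec y x Hy Hx).
    rewrite ip_addl in H1, H2. rewrite HTs in H1. rewrite (hinner_sym E x (T y)) in H1.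
    rewrite HPs in H1 by auto. rewrite (hinner_sym E x (P y)) in H1.
    rewrite (hinner_sym E x (K y)). lra.
  - intros x y Hx Hy. rewrite Hdec, ip_addl; auto.
Qed.

Lemma Y_lemma (T : E -> E) (V : E -> Prop) P K alpha : Struct T V P K alpha ->
  exists ys : list E, forall x, V x -> (forall y, In y ys -> ip x y = 0) -> alpha / 2 * nn x <= q T x.
Proof.
  intros HS. destruct (compact_constraints V K (alpha/2) (cs_sub V (st_V _ _ _ _ _ HS)) (st_K _ _ _ _ _ HS)
    (st_KV _ _ _ _ _ HS) (st_Ksym _ _ _ _ _ HS) (st_Kc _ _ _ _ _ HS)) as [ys Hys].
  generalize (st_alpha _ _ _ _ _ HS); lra.
  exists ys. intros x Hx Hy. unfold q. rewrite (st_dec _ _ _ _ _ HS) by auto.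
  specialize (Hys x Hx Hy). assert (H1 := cs2 (K x) x). assert (H2 := st_coer _ _ _ _ _ HS x Hx).
  rewrite <- hnorm_sq in *. generalize (hnorm_ge0 x) (hnorm_ge0 (K x)). nra.
Qed.

Lemma ker_lc (T : E -> E) (V : E -> Prop) (v : nat -> E) c k : is_linear T -> subspace V -> (forall i, (i < k)%nat -> in_ker T V (v i)) ->
  in_ker T V (lincomb v c k).
Proof.
  intros HT HV Hv. split. apply lc_sub; auto. intros i Hi; apply Hv; auto.
  intros y Hy. rewrite lc_lin by auto. rewrite lc_ip. apply rsum_zero. intros i Hi.
  rewrite (proj2 (Hv i Hi)); auto. ring.
Qed.

Lemma neg_bound (T : E -> E) (V : E -> Prop) (ys : list E) beta : subspace V -> (forall x, V x -> (forall y, In y ys -> ip x y = 0) -> beta * nn x <= q T x) ->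
  0 <= beta -> ~ neg_dim_ge T V (S (length ys)).
Proof.
  intros HV H Hb [v [Hv Hneg]].
  destruct (dim_lemma (S (length ys)) ys v) as [c [Hc Horth]]. lia.
  specialize (Hneg c Hc). specialize (H (lincomb v c (S (length ys)))).
  unfold q in H. assert (H0 := nn_ge0 (lincomb v c (S (length ys)))).
  assert (beta * nn (lincomb v c (S (length ys))) <= ip (T (lincomb v c (S (length ys)))) (lincomb v c (S (length ys)))).
  apply H; auto. apply lc_sub; auto. nra.
Qed.

Lemma ker_bound (T : E -> E) (V : E -> Prop) (ys : list E) beta : is_linear T -> subspace V ->
  (forall x, V x -> (forall y, In y ys -> ip x y = 0) -> beta * nn x <= q T x) ->
  0 < beta -> ~ ker_dim_ge T V (S (length ys)).
Proof.
  intros HT HV H Hb [v [Hv Hind]].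
  destruct (dim_lemma (S (length ys)) ys v) as [c [[i [Hi Hci]] Horth]]. lia.
  assert (Hk := ker_lc T V v c (S (length ys)) HT HV Hv).
  set (w := lincomb v c (S (length ys))) in *.
  assert (Hq : q T w = 0). { unfold q. apply (proj2 Hk). apply Hk. }
  assert (beta * nn w <= q T w). apply H; auto. apply Hk.
  assert (nn w = 0). generalize (nn_ge0 w). nra.
  apply Hci. apply (Hind c); auto. apply nn_eq0; auto.
Qed.

Lemma part2 (T : E -> E) (V : E -> Prop) : in_A T V -> (exists n, n_minus_eq T V n) /\ (exists d, ker_dim_eq T V d).
Proof.
  intro HA. destruct (setup T V HA) as [P [K [alpha HS]]].
  destruct (Y_lemma _ _ _ _ _ HS) as [ys Hys].
  assert (Ha := st_alpha _ _ _ _ _ HS). assert (HV := cs_sub V (st_V _ _ _ _ _ HS)).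
  split.
  - destruct (find_trans (neg_dim_ge T V) (S (length ys))) as [n Hn].
    exists (fun _ => z0). split. intros; lia. intros c [i [Hi _]]. lia.
    apply neg_bound with (alpha/2); auto. lra.
    exists n; auto.
  - destruct (find_trans (ker_dim_ge T V) (S (length ys))) as [n Hn].
    exists (fun _ => z0). split. intros; lia. intros c _ i Hi. lia.
    apply ker_bound with (alpha/2); auto. apply (st_T _ _ _ _ _ HS). lra.
    exists n; auto.
Qed.
End Setup.

Section Pert.
Context {E : RHilbert}.
Notation ip := (hinner E).
Notation add := (hadd E).
Notation sc := (hscal E).
Notation op := (hopp E).
Notation z0 := (hzero E).

Lemma pert_form (B : E -> E) M eps (x y : E) : is_linear B -> (forall a b, ip (B a) b = ip a (B b)) ->
  0 <= M -> (forall z, hnorm (B z) <= M * hnorm z) -> 0 <= eps <= 1 ->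
  hnorm (hsub y x) <= eps * hnorm x ->
  q B x - 3 * M * eps * nn x <= q B y <= q B x + 3 * M * eps * nn x.
Proof.
  intros Hl Hs HM HB He Hr. set (r := hsub y x).
  assert (Hy : y = add x r) by (unfold r; vecsolve). rewrite Hy. unfold q.
  rewrite lin_add by auto. ipsimpl. rewrite (Hs r x), (hinner_sym E r (B x)).
  assert (H1 := cs (B x) r). assert (H2 := cs (B r) r).
  assert (H3 := HB x). assert (H4 := HB r). fold r in Hr.
  assert (Hx0 := hnorm_ge0 x). assert (Hr0 := hnorm_ge0 r). assert (Hbx := hnorm_ge0 (B x)).
  assert (Hbr := hnorm_ge0 (B r)).
  assert (Ha : Rabs (ip (B x) r) <= M * eps * nn x).
  { eapply Rle_trans. apply H1. rewrite <- hnorm_sq.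
    apply Rle_trans with ((M * hnorm x) * (eps * hnorm x)). apply Rmult_le_compat; auto. nra. }
  assert (Hb : Rabs (ip (B r) r) <= M * eps * nn x).
  { eapply Rle_trans. apply H2. rewrite <- hnorm_sq.
    apply Rle_trans with ((M * hnorm r) * hnorm r). apply Rmult_le_compat_r; auto.
    apply Rle_trans with ((M * (eps * hnorm x)) * (eps * hnorm x)).
    apply Rmult_le_compat; auto. apply Rmult_le_pos; auto. apply Rmult_le_compat_l; auto.
    assert (eps * hnorm x <= hnorm x) by nra.
    replace (M * (eps * hnorm x) * (eps * hnorm x)) with ((M * (hnorm x * hnorm x)) * (eps * eps)) by ring.
    replace (M * eps * (hnorm x * hnorm x)) with ((M * (hnorm x * hnorm x)) * eps) by ring.
    apply Rmult_le_compat_l. apply Rmult_le_pos; nra. nra. }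
  assert (Ra := Rle_abs (ip (B x) r)). assert (Ra' := Rle_abs (- ip (B x) r)). rewrite Rabs_Ropp in Ra'.
  assert (Rb := Rle_abs (ip (B r) r)). assert (Rb' := Rle_abs (- ip (B r) r)). rewrite Rabs_Ropp in Rb'.
  split; lra.
Qed.

Lemma pert_op (A B : E -> E) eps x : (forall z, hnorm (hsub (A z) (B z)) <= eps * hnorm z) -> 0 <= eps ->
  q B x - eps * nn x <= q A x <= q B x + eps * nn x.
Proof.
  intros H He. unfold q.
  assert (H1 := cs (hsub (A x) (B x)) x). rewrite ip_subl in H1. specialize (H x).
  assert (Ra := Rle_abs (ip (A x) x - ip (B x) x)). assert (Ra' := Rle_abs (- (ip (A x) x - ip (B x) x))).
  rewrite Rabs_Ropp in Ra'. rewrite <- hnorm_sq. assert (Hx0 := hnorm_ge0 x).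
  assert (Rabs (ip (A x) x - ip (B x) x) <= eps * hnorm x * hnorm x).
  { eapply Rle_trans. apply H1. apply Rmult_le_compat_r; auto. }
  split; lra.
Qed.

Lemma lc_piv2 (v : nat -> E) (b c : nat -> R) k :
  lincomb v (fun i => if Nat.ltb i k then c i else - rsum (fun i => c i * b i) k) (S k) =
  lincomb (fun i => hsub (v i) (sc (b i) (v k))) c k.
Proof.
  simpl. rewrite lc_piv. replace (Nat.ltb k k) with false by (symmetry; apply Nat.ltb_irrefl).
  rewrite (lc_ext v v _ c k); auto. vecsolve.
  intros i Hi. replace (Nat.ltb i k) with true; auto. symmetry; apply Nat.ltb_lt; auto.
Qed.

Lemma lc_unit (v : nat -> E) k : lincomb v (fun i => if Nat.eqb i k then 1 else 0) (S k) = v k.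
Proof.
  simpl. rewrite lc_zero. rewrite Nat.eqb_refl. vecsolve.
  intros i Hi. destruct (Nat.eqb_spec i k). lia. auto.
Qed.

Lemma unif_neg (T : E -> E) : is_linear T -> (forall a b, ip (T a) b = ip a (T b)) ->
  forall k (v : nat -> E), (forall c, (exists i, (i < k)%nat /\ c i <> 0) -> q T (lincomb v c k) < 0) ->
  exists beta, 0 < beta /\ forall c, q T (lincomb v c k) <= - beta * nn (lincomb v c k).
Proof.
  intros Hl Hs. induction k; intros v Hneg.
  - exists 1. split. lra. intro c. simpl. unfold q. rewrite lin_zero, ip0l, nn0 by auto. lra.
  - set (u := v k).
    assert (Hqu : q T u < 0).
    { assert (H := Hneg (fun i => if Nat.eqb i k then 1 else 0)). rewrite lc_unit in H. apply H.
      exists k. split. lia. rewrite Nat.eqb_refl. lra. }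
    assert (Hnu : 0 < nn u).
    { destruct (Rle_lt_or_eq_dec _ _ (nn_ge0 u)); auto. symmetry in e. apply nn_eq0 in e.
      unfold q in Hqu. rewrite e, ip0r in Hqu. lra. }
    set (b := fun i => ip (T (v i)) u / q T u).
    set (v' := fun i => hsub (v i) (sc (b i) u)).
    assert (Horth : forall i, ip (T (v' i)) u = 0).
    { intro i. unfold v', b. rewrite lin_sub, lin_sc by auto. ipsimpl. unfold q. field.
      unfold q in Hqu; lra. }
    destruct (IHk v') as [beta' [Hb' Hv']].
    { intros c Hc. unfold v', u. rewrite <- lc_piv2. apply Hneg.
      destruct Hc as [i [Hi Hci]]. exists i. split. lia.
      replace (Nat.ltb i k) with true; auto. symmetry; apply Nat.ltb_lt; auto. }
    set (gam := - q T u / nn u).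
    assert (Hgam : 0 < gam). { unfold gam. apply Rdiv_lt_0_compat; lra. }
    exists (Rmin beta' gam / 2). split. assert (0 < Rmin beta' gam) by (apply Rmin_glb_lt; auto). lra.
    intro c.
    set (x' := lincomb v' c k). set (s := c k + rsum (fun i => c i * b i) k).
    assert (Hd : lincomb v c (S k) = add x' (sc s u)).
    { simpl. unfold x', v'. rewrite lc_piv. unfold s, u. vecsolve. }
    rewrite Hd.
    assert (Hx'u : ip (T x') u = 0).
    { unfold x'. rewrite lc_lin, lc_ip by auto. apply rsum_zero. intros i Hi. rewrite Horth. ring. }
    assert (Hq : q T (add x' (sc s u)) = q T x' + s * s * q T u).
    { unfold q. rewrite lin_add, lin_sc by auto. ipsimpl. rewrite Hx'u.
      rewrite (Hs u x'), (hinner_sym E u (T x')), Hx'u. ring. }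
    rewrite Hq. specialize (Hv' c). fold x' in Hv'.
    assert (Hn : nn (add x' (sc s u)) <= 2 * nn x' + 2 * (s * s) * nn u).
    { unfold nn. ipsimpl. assert (H := nn_ge0 (hsub x' (sc s u))). unfold nn in H. ipsimpl_in H.
      rewrite (hinner_sym E u x') in *. nra. }
    assert (Hqu' : q T u = - gam * nn u). { unfold gam. field. lra. }
    rewrite Hqu'.
    assert (Hm1 := Rmin_l beta' gam). assert (Hm2 := Rmin_r beta' gam).
    assert (Hm0 : 0 < Rmin beta' gam) by (apply Rmin_glb_lt; auto).
    assert (H0 := nn_ge0 x'). assert (Hss : 0 <= s * s) by nra.
    assert (Rmin beta' gam / 2 * nn (add x' (sc s u)) <= Rmin beta' gam * (nn x' + s * s * nn u)) by nra.
    assert (Rmin beta' gam * nn x' <= beta' * nn x') by nra.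
    assert (Rmin beta' gam * (s * s * nn u) <= gam * (s * s * nn u)).
    { apply Rmult_le_compat_r; auto. nra. }
    nra.
Qed.
End Pert.

Section P4.
Context {E : RHilbert}.
Notation ip := (hinner E).
Notation add := (hadd E).
Notation sc := (hscal E).
Notation op := (hopp E).
Notation z0 := (hzero E).

Lemma lc_trunc (v : nat -> E) c j k : (j <= k)%nat ->
  lincomb v (fun i => if Nat.ltb i j then c i else 0) k = lincomb v c j.
Proof.
  intro Hjk. replace k with (j + (k - j))%nat by lia. rewrite lc_app.
  rewrite (lc_zero _ _ (k - j)). rewrite add0r. apply lc_ext; auto.
  intros i Hi. replace (Nat.ltb i j) with true; auto. symmetry; apply Nat.ltb_lt; auto.
  intros i Hi. replace (Nat.ltb (j + i) j) with false; auto. symmetry; apply Nat.ltb_ge; lia.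
Qed.

Lemma neg_mono (T : E -> E) V j k : neg_dim_ge T V k -> (j <= k)%nat -> neg_dim_ge T V j.
Proof.
  intros [v [Hv Hn]] Hjk. exists v. split. intros; apply Hv; lia.
  intros c [i [Hi Hci]]. rewrite <- (lc_trunc v c j k Hjk). apply Hn.
  exists i. split. lia. replace (Nat.ltb i j) with true; auto. symmetry; apply Nat.ltb_lt; auto.
Qed.

Lemma ker_mono (T : E -> E) V j k : ker_dim_ge T V k -> (j <= k)%nat -> ker_dim_ge T V j.
Proof.
  intros [v [Hv Hn]] Hjk. exists v. split. intros; apply Hv; lia.
  intros c Hc i Hi. rewrite <- (lc_trunc v c j k Hjk) in Hc.
  assert (H := Hn _ Hc i ltac:(lia)). simpl in H.
  replace (Nat.ltb i j) with true in H; auto. symmetry; apply Nat.ltb_lt; auto.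
Qed.

Lemma nn_pos_of (x : E) : x <> z0 -> 0 < nn x.
Proof.
  intro H. destruct (Rle_lt_or_eq_dec _ _ (nn_ge0 x)); auto. symmetry in e. apply nn_eq0 in e. contradiction.
Qed.

Lemma part4 (T : E -> E) (V : E -> Prop) (n : nat) : in_A T V -> n_minus_eq T V n ->
     exists eps, 0 < eps /\
       forall (T' : E -> E) (V' : E -> Prop) (n' : nat), in_A T' V' ->
         opnorm_lt (fun x => hsub (T' x) (T x)) eps -> gdist_lt V' V eps ->
         n_minus_eq T' V' n' -> (n <= n')%nat.
Proof.
  intros HA [[v [Hv Hneg]] _].
  destruct (setup T V HA) as [P [K [alpha HS]]].
  assert (HT := st_T _ _ _ _ _ HS). assert (HTs := st_Tsym _ _ _ _ _ HS).
  assert (HV := cs_sub V (st_V _ _ _ _ _ HS)).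
  destruct (unif_neg T (proj1 HT) HTs n v Hneg) as [beta [Hb Hbeta]].
  destruct (bnd T HT) as [M [HM HMb]].
  set (eps := Rmin (1/2) (beta / (2 * (3 * M + 1)))).
  assert (He1 : eps <= 1/2) by apply Rmin_l.
  assert (He2 : eps <= beta / (2 * (3 * M + 1))) by apply Rmin_r.
  assert (He0 : 0 < eps). { apply Rmin_glb_lt. lra. apply Rdiv_lt_0_compat; lra. }
  assert (He3 : (3 * M + 1) * eps <= beta / 2).
  { apply Rmult_le_reg_l with (/ (3 * M + 1)). apply Rinv_0_lt_compat; lra.
    rewrite <- Rmult_assoc, Rinv_l, Rmult_1_l by lra. eapply Rle_trans. apply He2.
    right. field. lra. }
  exists eps. split; auto.
  intros T' V' n' HA' Hop [p1 [p2 [Hp1 [Hp2 Hpd]]]] [_ Hn'].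
  assert (HV' := cs_sub V' (proj1 (proj2 HA'))).
  destruct (Compare_dec.le_lt_dec n n') as [Hle|Hlt]; auto. exfalso. apply Hn'.
  apply neg_mono with n; [|lia].
  exists (fun i => p1 (v i)). split. intros; apply (pr_in V' p1 Hp1).
  intros c Hc. rewrite <- lc_lin by apply (pr_lin V' p1 HV' Hp1).
  set (x := lincomb v c n). assert (Hx : V x) by (apply lc_sub; auto).
  assert (Hqx := Hbeta c). fold x in Hqx. assert (Hqn := Hneg c Hc). fold x in Hqn.
  assert (Hx0 : x <> z0). { intro Hz. unfold q in Hqn. rewrite Hz, ip0r in Hqn. lra. }
  assert (Hnx := nn_pos_of x Hx0).
  assert (Hd : hnorm (hsub (p1 x) x) <= eps * hnorm x).
  { rewrite <- (pr_id V p2 HV Hp2 x Hx) at 2. apply (opn _ _ Hpd x). }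
  assert (H1 := pert_form T M eps x (p1 x) (proj1 HT) HTs HM HMb ltac:(lra) Hd).
  assert (H2 := pert_op T' T eps (p1 x) (opn _ _ Hop) ltac:(lra)).
  assert (H3 : nn (p1 x) <= nn x).
  { rewrite <- !hnorm_sq. apply sq_le. apply hnorm_ge0. eapply pr_norm; eauto. }
  change (q T' (p1 x) < 0).
  assert (eps * nn (p1 x) <= eps * nn x) by (apply Rmult_le_compat_l; lra).
  assert (3 * M * eps * nn x + eps * nn x <= beta / 2 * nn x).
  { replace (3 * M * eps * nn x + eps * nn x) with (((3 * M + 1) * eps) * nn x) by ring.
    apply Rmult_le_compat_r; lra. }
  assert (0 < beta * nn x) by (apply Rmult_lt_0_compat; auto).
  replace (- beta * nn x) with (- (beta * nn x)) in Hqx by ring.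
  lra.
Qed.
End P4.

Lemma arch_inv r : 0 < r -> exists N, / INR (S N) < r.
Proof.
  intro Hr. destruct (INR_archimed r 1 Hr) as [N HN]. exists N.
  rewrite S_INR. assert (H0 := pos_INR N).
  apply Rmult_lt_reg_l with (INR N + 1). lra. rewrite Rinv_r by lra. nra.
Qed.
Lemma inv_mono N m : (N <= m)%nat -> / INR (S m) <= / INR (S N).
Proof.
  intro H. apply Rinv_le_contravar. apply lt_0_INR; lia. apply le_INR; lia.
Qed.
Lemma inv_pos m : 0 < / INR (S m).
Proof. apply Rinv_0_lt_compat. apply lt_0_INR; lia. Qed.
Lemma phi_ge (phi : nat -> nat) : (forall n, (phi n < phi (S n))%nat) -> forall n, (n <= phi n)%nat.
Proof. intros H n. induction n. lia. specialize (H n). lia. Qed.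

Section Gen.
Context {E : RHilbert}.
Notation ip := (hinner E).
Notation add := (hadd E).
Notation sc := (hscal E).
Notation op := (hopp E).
Notation z0 := (hzero E).

Lemma q_cont (T : E -> E) M a b : is_linear T -> (forall x y, ip (T x) y = ip x (T y)) ->
  (forall z, hnorm (T z) <= M * hnorm z) -> 0 <= M ->
  q T a <= q T b + M * hnorm (hsub a b) * (hnorm a + hnorm b).
Proof.
  intros Hl Hs HB HM. unfold q.
  replace (ip (T a) a) with (ip (T b) b + ip (T (hsub a b)) a + ip (T b) (hsub a b)).
  2: { rewrite lin_sub by auto. ipsimpl. ring. }
  assert (H1 := cs1 (T (hsub a b)) a). assert (H2 := cs1 (T b) (hsub a b)).
  assert (H3 := HB (hsub a b)). assert (H4 := HB b).
  assert (Ha := hnorm_ge0 a). assert (Hb := hnorm_ge0 b). assert (Hab := hnorm_ge0 (hsub a b)).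
  assert (hnorm (T (hsub a b)) * hnorm a <= M * hnorm (hsub a b) * hnorm a) by (apply Rmult_le_compat_r; auto).
  assert (hnorm (T b) * hnorm (hsub a b) <= M * hnorm b * hnorm (hsub a b)) by (apply Rmult_le_compat_r; auto).
  nra.
Qed.

Lemma lim_ip (u : nat -> E) l g : converges u l -> (forall m, ip (u m) g = 0) -> ip l g = 0.
Proof.
  intros Hc Hu. apply NNPP. intro Hne.
  assert (Hp : 0 < Rabs (ip l g)) by (apply Rabs_pos_lt; auto).
  destruct (Hc (Rabs (ip l g) / (hnorm g + 1))) as [N HN].
  { apply Rdiv_lt_0_compat; auto. generalize (hnorm_ge0 g); lra. }
  specialize (HN N (le_n _)).
  assert (Heq : ip l g = - ip (hsub (u N) l) g) by (ipsimpl; rewrite Hu; ring).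
  assert (H1 := cs (hsub (u N) l) g). rewrite Heq, Rabs_Ropp in *.
  assert (Hg := hnorm_ge0 g).
  assert (hnorm (hsub (u N) l) * hnorm g <= Rabs (ip (hsub (u N) l) g) / (hnorm g + 1) * hnorm g)
    by (apply Rmult_le_compat_r; lra).
  assert (Rabs (ip (hsub (u N) l) g) / (hnorm g + 1) * hnorm g < Rabs (ip (hsub (u N) l) g)).
  { unfold Rdiv. rewrite Rmult_assoc. rewrite <- (Rmult_1_r (Rabs (ip (hsub (u N) l) g))) at 2.
    apply Rmult_lt_compat_l; auto. apply Rmult_lt_reg_l with (hnorm g + 1). lra.
    rewrite <- Rmult_assoc, Rinv_r by lra. lra. }
  lra.
Qed.

Lemma q_sc (T : E -> E) a x : is_linear T -> q T (sc a x) = a * a * q T x.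
Proof. intro Hl. unfold q. rewrite lin_sc by auto. ipsimpl. ring. Qed.
End Gen.

Lemma in_list_of {X : Type} (f : nat -> X) k y : In y (map f (seq 0 k)) -> exists i, (i < k)%nat /\ y = f i.
Proof.
  intro H. apply in_map_iff in H. destruct H as [i [Hi Hin]]. apply in_seq in Hin.
  exists i. split. lia. auto.
Qed.
Lemma length_list_of {X : Type} (f : nat -> X) k : length (map f (seq 0 k)) = k.
Proof. rewrite length_map, length_seq. auto. Qed.

Lemma ltb_t i k : (i < k)%nat -> Nat.ltb i k = true.
Proof. intro; apply Nat.ltb_lt; auto. Qed.
Lemma ltb_f i k : (k <= i)%nat -> Nat.ltb i k = false.
Proof. intro; apply Nat.ltb_ge; auto. Qed.

Section Core.
Context {E : RHilbert}.
Notation ip := (hinner E).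
Notation add := (hadd E).
Notation sc := (hscal E).
Notation op := (hopp E).
Notation z0 := (hzero E).

Variables (T : E -> E) (V : E -> Prop) (P K : E -> E) (alpha : R) (n d : nat) (w z : nat -> E).
Hypothesis HS : Struct T V P K alpha.
Hypothesis Hw : forall i, (i < n)%nat -> V (w i).
Hypothesis Hwneg : forall c, (exists i, (i < n)%nat /\ c i <> 0) -> ip (T (lincomb w c n)) (lincomb w c n) < 0.
Hypothesis Hnn : ~ neg_dim_ge T V (S n).
Hypothesis Hz : forall i, (i < d)%nat -> in_ker T V (z i).
Hypothesis Hzind : forall c, lincomb z c d = z0 -> forall i, (i < d)%nat -> c i = 0.
Hypothesis Hkn : ~ ker_dim_ge T V (S d).

Let HTl : is_linear T := proj1 (st_T _ _ _ _ _ HS).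
Let HTs := st_Tsym _ _ _ _ _ HS.
Let HV : subspace V := cs_sub V (st_V _ _ _ _ _ HS).

Definition gf (i : nat) : E := if Nat.ltb i n then T (w i) else z (i - n)%nat.
Definition Sp (x : E) : Prop := V x /\ forall i, (i < n + d)%nat -> ip x (gf i) = 0.

Lemma Sp_w x : Sp x -> forall i, (i < n)%nat -> ip x (T (w i)) = 0.
Proof. intros [_ H] i Hi. assert (H1 := H i ltac:(lia)). unfold gf in H1. rewrite ltb_t in H1; auto. Qed.
Lemma Sp_z x : Sp x -> forall j, (j < d)%nat -> ip x (z j) = 0.
Proof.
  intros [_ H] j Hj. assert (H1 := H (n + j)%nat ltac:(lia)). unfold gf in H1. rewrite ltb_f in H1 by lia.
  replace (n + j - n)%nat with j in H1 by lia. auto.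
Qed.

Lemma Sp_sub : subspace Sp.
Proof.
  destruct HV as [H0 [Ha Hs]]. split; [|split].
  - split; auto. intros; apply ip0l.
  - intros x y [Hx Hx'] [Hy Hy']. split; auto. intros. rewrite ip_addl, Hx', Hy'; auto. ring.
  - intros a x [Hx Hx']. split; auto. intros. rewrite ip_scl, Hx'; auto. ring.
Qed.

Lemma ker_orth1 j y : (j < d)%nat -> V y -> ip (T y) (z j) = 0.
Proof. intros Hj Hy. rewrite HTs, hinner_sym. apply (Hz j Hj). auto. Qed.
Lemma ker_orth2 j y : (j < d)%nat -> V y -> ip (T (z j)) y = 0.
Proof. intros Hj Hy. apply (Hz j Hj). auto. Qed.

Lemma Tlc_ip (v : nat -> E) c k y : ip (T (lincomb v c k)) y = rsum (fun i => c i * ip (T (v i)) y) k.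
Proof. rewrite lc_lin, lc_ip; auto. Qed.
Lemma ip_lc_r (v : nat -> E) c k y : ip y (lincomb v c k) = rsum (fun i => c i * ip y (v i)) k.
Proof. rewrite hinner_sym, lc_ip. apply rsum_ext. intros. rewrite hinner_sym; auto. Qed.

Lemma L1 x : Sp x -> 0 <= q T x.
Proof.
  intros Hx. apply Rnot_lt_le. intro Hq. apply Hnn.
  exists (fun i => if Nat.ltb i n then w i else x). split.
  - intros i Hi. destruct (Nat.ltb_spec i n). auto. apply Hx.
  - intros c Hc. simpl. rewrite (lc_ext _ w c c n).
    2: intros i Hi; rewrite ltb_t; auto. 2: auto.
    rewrite ltb_f by lia. set (a := lincomb w c n).
    assert (Hax : ip (T a) x = 0).
    { unfold a. rewrite Tlc_ip. apply rsum_zero. intros i Hi. rewrite hinner_sym, (Sp_w x Hx i Hi). ring. }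
    rewrite lin_add, lin_sc by auto. ipsimpl. rewrite Hax.
    rewrite (HTs x a), (hinner_sym E x (T a)), Hax.
    destruct (classic (exists i, (i < n)%nat /\ c i <> 0)) as [Hc'|Hc'].
    + assert (H1 := Hwneg c Hc'). fold a in H1. unfold q in Hq. assert (0 <= c n * c n) by nra. nra.
    + assert (Ha0 : a = z0).
      { unfold a. apply lc_zero. intros i Hi. apply NNPP. intro. apply Hc'. exists i; auto. }
      assert (c n <> 0).
      { destruct Hc as [i [Hi Hci]]. destruct (Nat.eq_dec i n). subst; auto.
        exfalso. apply Hc'. exists i. split; auto. lia. }
      rewrite Ha0, lin_zero, ?ip0l, ?ip0r by auto. unfold q in Hq. assert (0 < c n * c n) by nra. nra.
Qed.

Definition uf (v0 : E) (i : nat) : E :=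
  if Nat.ltb i n then w i else if Nat.ltb i (n + d) then z (i - n)%nat else v0.

Lemma lc_split3 v0 c : lincomb (uf v0) c (S (n + d)) =
  add (add (lincomb w c n) (lincomb z (fun j => c (n + j)%nat) d)) (sc (c (n + d)%nat) v0).
Proof.
  simpl. unfold uf at 2. rewrite ltb_f, ltb_f by lia. rewrite lc_app. f_equal. f_equal.
  apply lc_ext; auto. intros i Hi. unfold uf. rewrite ltb_t; auto.
  apply lc_ext; auto. intros i Hi. unfold uf. rewrite ltb_f, ltb_t by lia. f_equal. lia.
Qed.

Lemma L2 v0 : V v0 -> exists s a b, Sp s /\ v0 = add s (add (lincomb w a n) (lincomb z b d)).
Proof.
  intro Hv0.
  destruct (dim_lemma (S (n + d)) (map gf (seq 0 (n + d))) (uf v0)) as [c [Hc Horth]].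
  { rewrite length_list_of. lia. }
  set (a := lincomb w c n). set (b := lincomb z (fun j => c (n + j)%nat) d).
  assert (HaV : V a) by (apply lc_sub; auto).
  assert (HbV : V b). { apply lc_sub; auto. intros; apply Hz; auto. }
  assert (HSp : Sp (lincomb (uf v0) c (S (n + d)))).
  { split. apply lc_sub; auto. intros i Hi. unfold uf. destruct (Nat.ltb_spec i n). auto.
    destruct (Nat.ltb_spec i (n + d)). apply Hz. lia. auto.
    intros i Hi. apply Horth. apply in_map_iff. exists i. split; auto. apply in_seq. lia. }
  rewrite lc_split3 in HSp. fold a b in HSp.
  assert (Hcn : c (n + d)%nat <> 0).
  { intro Hcn. rewrite Hcn in HSp.
    replace (add (add a b) (sc 0 v0)) with (add a b) in HSp by vecsolve.
    assert (HTa : ip (add a b) (T a) = 0).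
    { unfold a at 2. rewrite lc_lin, ip_lc_r by auto. apply rsum_zero. intros i Hi.
      rewrite (Sp_w _ HSp i Hi). ring. }
    rewrite ip_addl in HTa.
    assert (Hba : ip b (T a) = 0).
    { rewrite <- HTs. unfold b. rewrite Tlc_ip. apply rsum_zero. intros j Hj. rewrite ker_orth2; auto. ring. }
    rewrite Hba, <- HTs in HTa.
    assert (Hca : forall i, (i < n)%nat -> c i = 0).
    { intros i Hi. apply NNPP. intro Hci. assert (H1 := Hwneg c (ex_intro _ i (conj Hi Hci))).
      fold a in H1. lra. }
    assert (Ha0 : a = z0) by (apply lc_zero; auto).
    rewrite Ha0 in HSp. replace (add z0 b) with b in HSp by vecsolve.
    assert (Hbb : nn b = 0).
    { unfold nn. unfold b at 2. rewrite ip_lc_r. apply rsum_zero. intros j Hj. rewrite (Sp_z _ HSp j Hj). ring. }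
    apply nn_eq0 in Hbb. assert (Hcb := Hzind _ Hbb).
    destruct Hc as [i [Hi Hci]]. apply Hci.
    destruct (Nat.ltb_spec i n). auto.
    destruct (Nat.ltb_spec i (n + d)).
    replace i with (n + (i - n))%nat by lia. apply Hcb. lia.
    replace i with (n + d)%nat by lia. auto. }
  set (r := - / c (n + d)%nat).
  exists (sc (/ c (n + d)%nat) (add (add a b) (sc (c (n + d)%nat) v0))).
  exists (fun i => r * c i), (fun j => r * c (n + j)%nat).
  split. apply Sp_sub; auto.
  rewrite !lc_scal. fold a b. unfold r. apply vec_ext; intro y. ipsimpl. field. auto.
Qed.

Lemma L3 x : Sp x -> (forall s, Sp s -> ip (T x) s = 0) -> x = z0.
Proof.
  intros Hx Hk.
  assert (Hall : forall v0, V v0 -> ip (T x) v0 = 0).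
  { intros v0 Hv0. destruct (L2 v0 Hv0) as [s [a [b [Hs Heq]]]]. rewrite Heq. ipsimpl.
    rewrite Hk by auto. rewrite !ip_lc_r.
    rewrite (rsum_zero _ n), (rsum_zero _ d). ring.
    intros j Hj. rewrite ker_orth1; auto. ring. apply Hx.
    intros i Hi. rewrite HTs, (Sp_w x Hx i Hi). ring. }
  apply NNPP. intro Hx0. apply Hkn.
  exists (fun i => if Nat.ltb i d then z i else x). split.
  - intros i Hi. destruct (Nat.ltb_spec i d). apply Hz; auto. split. apply Hx. auto.
  - intros c Hc. simpl in Hc. rewrite ltb_f in Hc by lia.
    rewrite (lc_ext _ z c c d) in Hc. 2: intros; rewrite ltb_t; auto. 2: auto.
    assert (H1 := f_equal (fun y => ip y x) Hc). simpl in H1. ipsimpl_in H1.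
    rewrite lc_ip, rsum_zero in H1.
    2: { intros j Hj. rewrite hinner_sym, (Sp_z x Hx j Hj). ring. }
    assert (Hnx := nn_pos_of x Hx0). unfold nn in Hnx.
    assert (Hcd : c d = 0) by nra.
    rewrite Hcd in Hc. replace (add (lincomb z c d) (sc 0 x)) with (lincomb z c d) in Hc by vecsolve.
    intros i Hi. destruct (Nat.eq_dec i d). subst; auto. apply Hzind; auto. lia.
Qed.


Lemma L4 : exists beta, 0 < beta /\ forall x, Sp x -> beta * nn x <= q T x.
Proof.
  assert (HSs := Sp_sub).
  assert (Ha := st_alpha _ _ _ _ _ HS).
  destruct (bnd T (st_T _ _ _ _ _ HS)) as [M [HM HMb]].
  apply NNPP. intro Hnot.
  assert (Hex : forall k : nat, exists x, Sp x /\ hnorm x = 1 /\ q T x < / INR (S k)).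
  { intro k. apply NNPP. intro Hk. apply Hnot. exists (/ INR (S k)). split. apply inv_pos.
    intros x Hx. apply Rnot_lt_le. intro Hlt.
    assert (Hx0 : x <> z0). { intro; subst. unfold q in Hlt. rewrite lin_zero, ip0l, nn0 in Hlt by auto. lra. }
    assert (Hnx := nn_pos_of x Hx0).
    assert (Hh : 0 < hnorm x). { destruct (Rle_lt_or_eq_dec _ _ (hnorm_ge0 x)); auto. exfalso; apply Hx0, hnorm_eq0; auto. }
    apply Hk. exists (sc (/ hnorm x) x). split. apply HSs; auto. split.
    - rewrite hnorm_sc, Rabs_right. field. lra. left. apply Rinv_0_lt_compat; auto.
    - rewrite q_sc by auto. rewrite <- hnorm_sq in Hlt.
      apply Rmult_lt_reg_l with (hnorm x * hnorm x). nra.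
      replace (hnorm x * hnorm x * (/ hnorm x * / hnorm x * q T x)) with (q T x) by (field; lra). lra. }
  set (xs := fun k => proj1_sig (constructive_indefinite_description _ (Hex k))).
  assert (Hxs : forall k, Sp (xs k) /\ hnorm (xs k) = 1 /\ q T (xs k) < / INR (S k)).
  { intro k. unfold xs. destruct (constructive_indefinite_description _ (Hex k)); auto. }
  destruct (st_Kc _ _ _ _ _ HS xs) as [phi [Hphi [l Hl]]].
  { intro k. apply Hxs. }
  { exists 1. intro k. right. apply Hxs. }
  assert (Hge := phi_ge phi Hphi).
  set (y := fun m => xs (phi m)).
  assert (Hy : forall m, Sp (y m) /\ hnorm (y m) = 1 /\ q T (y m) < / INR (S m)).
  { intro m. destruct (Hxs (phi m)) as [H1 [H2 H3]]. split; [exact H1|split; [exact H2|]].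
    eapply Rlt_le_trans. apply H3. apply inv_mono; auto. }
  assert (Hcau : forall eps, 0 < eps -> exists N, forall m k, (N <= m)%nat -> (N <= k)%nat ->
            hnorm (hsub (y m) (y k)) < eps).
  { intros eps Heps.
    assert (Hae : 0 < alpha * (eps * eps)) by (apply Rmult_lt_0_compat; nra).
    destruct (Hl (alpha * (eps * eps) / 16)) as [N1 HN1]. lra.
    destruct (arch_inv (alpha * (eps * eps) / 16)) as [N2 HN2]. lra.
    exists (max N1 N2). intros m k Hm Hk.
    destruct (Hy m) as [Sm [Nm Qm]]. destruct (Hy k) as [Sk [Nk Qk]].
    assert (Qm' : q T (y m) < alpha * (eps * eps) / 16).
    { eapply Rlt_le_trans. apply Qm. eapply Rle_trans. apply inv_mono with (N := N2). lia. lra. }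
    assert (Qk' : q T (y k) < alpha * (eps * eps) / 16).
    { eapply Rlt_le_trans. apply Qk. eapply Rle_trans. apply inv_mono with (N := N2). lia. lra. }
    assert (Km := HN1 m ltac:(lia)). assert (Kk := HN1 k ltac:(lia)). cbv beta in Km, Kk. fold (y m) (y k) in Km, Kk.
    set (a := y m) in *. set (b := y k) in *.
    assert (Hab : Sp (hsub a b)) by (apply sub_sub; auto).
    assert (Hapb : Sp (add a b)) by (apply HSs; auto).
    assert (Hq1 := L1 _ Hapb).
    assert (Hpar : q T (hsub a b) + q T (add a b) = 2 * q T a + 2 * q T b).
    { unfold q. rewrite lin_sub, lin_add by auto. ipsimpl. ring. }
    assert (Hco := st_coer _ _ _ _ _ HS (hsub a b) (proj1 Hab)).
    assert (Hdec := st_dec _ _ _ _ _ HS (hsub a b) (hsub a b) (proj1 Hab) (proj1 Hab)).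
    assert (HK := cs2 (K (hsub a b)) (hsub a b)).
    assert (HKl : hnorm (K (hsub a b)) < alpha * (eps * eps) / 8).
    { rewrite lin_sub by apply (st_K _ _ _ _ _ HS). eapply Rle_lt_trans. apply hnorm_tri_sub with (y := l).
      rewrite (hnorm_subC l). lra. }
    assert (Hn2 : hnorm (hsub a b) <= 2). { eapply Rle_trans. apply hnorm_sub_le. lra. }
    assert (HKb : - (alpha * (eps * eps) / 8 * 2) <= ip (K (hsub a b)) (hsub a b)).
    { eapply Rle_trans. 2: apply HK. apply Ropp_le_contravar. apply Rmult_le_compat; auto; try apply hnorm_ge0. lra. }
    assert (Hfin : alpha * nn (hsub a b) < alpha * (eps * eps / 2)).
    { unfold q in *. lra. }
    assert (nn (hsub a b) < eps * eps / 2) by (apply Rmult_lt_reg_l with alpha; auto).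
    rewrite <- hnorm_sq in H. assert (H0 := hnorm_ge0 (hsub a b)).
    apply Rnot_le_lt. intro Hc. assert (eps * eps <= hnorm (hsub a b) * hnorm (hsub a b)) by nra. nra. }
  destruct (cauchy_conv y Hcau) as [xi Hxi].
  assert (HxiV : V xi). { apply (st_V _ _ _ _ _ HS) with y; auto. intro m; apply Hy. }
  assert (HxiS : Sp xi).
  { split; auto. intros i Hi. apply (lim_ip y); auto. intro m. apply (proj2 (proj1 (Hy m))); auto. }
  assert (Hq0 : q T xi <= 0).
  { apply Rnot_lt_le. intro Hpos.
    set (e := q T xi). assert (He : 0 < e) by (unfold e; exact Hpos).
    set (dl := Rmin 1 (e / (2 * (3 * M + 1)))).
    assert (Hdl : 0 < dl). { apply Rmin_glb_lt. lra. apply Rdiv_lt_0_compat; lra. }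
    assert (Hdl1 : dl <= 1) by apply Rmin_l.
    assert (Hdl2 : dl <= e / (2 * (3 * M + 1))) by apply Rmin_r.
    destruct (Hxi dl Hdl) as [N1 HN1]. destruct (arch_inv (e / 2)) as [N2 HN2]. lra.
    set (m := max N1 N2). specialize (HN1 m ltac:(lia)). destruct (Hy m) as [_ [Hn1 Hqm]].
    assert (Hqm' : q T (y m) < e / 2).
    { eapply Rlt_le_trans. apply Hqm. eapply Rle_trans. apply inv_mono with (N := N2). lia. lra. }
    assert (Hc := q_cont T M xi (y m) HTl HTs HMb HM).
    rewrite hnorm_subC in Hc.
    assert (Hxn : hnorm xi <= 2).
    { assert (H1 := hnorm_rev xi (y m)). rewrite hnorm_subC in H1. lra. }
    assert (M * hnorm (hsub (y m) xi) * (hnorm xi + hnorm (y m)) <= M * dl * 3).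
    { apply Rmult_le_compat. apply Rmult_le_pos; auto. apply hnorm_ge0.
      generalize (hnorm_ge0 xi); lra. apply Rmult_le_compat_l; lra. lra. }
    assert (M * dl * 3 <= e / 2 * (3 * M / (3 * M + 1))).
    { replace (e / 2 * (3 * M / (3 * M + 1))) with ((3 * M) * (e / (2 * (3 * M + 1)))) by (field; lra).
      nra. }
    assert (e / 2 * (3 * M / (3 * M + 1)) <= e / 2).
    { rewrite <- (Rmult_1_r (e/2)) at 2. apply Rmult_le_compat_l. lra.
      apply Rmult_le_reg_l with (3 * M + 1). lra. unfold Rdiv. rewrite <- Rmult_assoc.
      rewrite (Rmult_comm (3*M+1) (3*M)), Rmult_assoc, Rinv_r by lra. lra. }
    fold e in Hc. lra. }
  assert (Hqe : q T xi = 0) by (generalize (L1 _ HxiS); lra).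
  assert (Hxi0 : xi <> z0).
  { intro Hz0. destruct (Hxi (1/2)) as [N HN]. lra. specialize (HN N (le_n _)).
    rewrite Hz0 in HN. replace (hsub (y N) z0) with (y N) in HN by vecsolve.
    destruct (Hy N) as [_ [H1 _]]. lra. }
  apply Hxi0. apply L3; auto.
  intros s Hs.
  assert (H := semi_cs Sp T HSs HTl (fun x y _ _ => HTs x y) (fun x Hx => L1 x Hx) xi s HxiS Hs).
  unfold q in Hqe. rewrite Hqe, Rmult_0_l in H. nra.
Qed.

End Core.

Section P3.
Context {E : RHilbert}.
Notation ip := (hinner E).
Notation add := (hadd E).
Notation sc := (hscal E).
Notation op := (hopp E).
Notation z0 := (hzero E).

Lemma lc_split2 (w z : nat -> E) c n d :
  lincomb (fun i => if Nat.ltb i n then w i else z (i - n)%nat) c (n + d) =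
  add (lincomb w c n) (lincomb z (fun j => c (n + j)%nat) d).
Proof.
  rewrite lc_app. f_equal. apply lc_ext; auto. intros; rewrite ltb_t; auto.
  apply lc_ext; auto. intros i Hi. rewrite ltb_f by lia. f_equal; lia.
Qed.

Lemma part3 (T : E -> E) (V : E -> Prop) (n d : nat) : in_A T V ->
     n_minus_eq T V n -> ker_dim_eq T V d ->
     exists eps, 0 < eps /\
       forall (T' : E -> E) (V' : E -> Prop) (n' d' : nat), in_A T' V' ->
         opnorm_lt (fun x => hsub (T' x) (T x)) eps -> gdist_lt V' V eps ->
         n_minus_eq T' V' n' -> ker_dim_eq T' V' d' -> (n' + d' <= n + d)%nat.
Proof.
  intros HA [[w [Hw Hwneg]] Hnn] [[z [Hz Hzind]] Hkn].
  destruct (setup T V HA) as [P [K [alpha HS]]].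
  assert (HT := st_T _ _ _ _ _ HS). assert (HTs := st_Tsym _ _ _ _ _ HS).
  assert (HV := cs_sub V (st_V _ _ _ _ _ HS)).
  destruct (L4 T V P K alpha n d w z HS Hw Hwneg Hnn Hz Hzind Hkn) as [beta [Hb Hbeta]].
  destruct (bnd T HT) as [M [HM HMb]].
  set (eps := Rmin (1/2) (beta / (8 * (3 * M + 1)))).
  assert (He1 : eps <= 1/2) by apply Rmin_l.
  assert (He2 : eps <= beta / (8 * (3 * M + 1))) by apply Rmin_r.
  assert (He0 : 0 < eps). { apply Rmin_glb_lt. lra. apply Rdiv_lt_0_compat; lra. }
  assert (He3 : (3 * M + 1) * eps <= beta / 8).
  { apply Rmult_le_reg_l with (/ (3 * M + 1)). apply Rinv_0_lt_compat; lra.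
    rewrite <- Rmult_assoc, Rinv_l, Rmult_1_l by lra. eapply Rle_trans. apply He2.
    right. field. lra. }
  exists eps. split; auto.
  intros T' V' n' d' HA' Hop [p1 [p2 [Hp1 [Hp2 Hpd]]]] [[w' [Hw' Hwneg']] _] [[z' [Hz' Hzind']] _].
  assert (HT' := proj1 (proj1 HA')). assert (HTs' := proj2 (proj1 HA')).
  assert (HV' := cs_sub V' (proj1 (proj2 HA'))).
  destruct (Compare_dec.le_lt_dec (n' + d') (n + d)) as [Hle|Hlt]; auto. exfalso.
  set (u := fun i => if Nat.ltb i n' then w' i else z' (i - n')%nat).
  set (gs := map (fun i => p2 (gf T n w z i)) (seq 0 (n + d))).
  destruct (dim_lemma (n' + d') gs u) as [c [Hc Horth]].
  { unfold gs. rewrite length_list_of. auto. }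
  set (y := lincomb u c (n' + d')).
  set (a := lincomb w' c n'). set (b := lincomb z' (fun j => c (n' + j)%nat) d').
  assert (Hyab : y = add a b) by (apply lc_split2).
  assert (HaV : V' a) by (apply lc_sub; auto).
  assert (Hbk : in_ker T' V' b) by (apply ker_lc; auto; apply HT').
  assert (HyV : V' y). { rewrite Hyab. apply HV'; auto. apply Hbk. }
  assert (Hqy : q T' y = q T' a).
  { unfold q. rewrite Hyab, lin_add by apply HT'. ipsimpl.
    assert (E1 : ip (T' b) a = 0) by (apply (proj2 Hbk); auto).
    assert (E2 : ip (T' b) b = 0) by (apply (proj2 Hbk); apply Hbk).
    assert (E3 : ip (T' a) b = 0) by (rewrite HTs', hinner_sym; auto).
    rewrite E1, E2, E3. ring. }
  assert (Hy0 : y <> z0 /\ q T' y <= 0).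
  { destruct (classic (exists i, (i < n')%nat /\ c i <> 0)) as [Hci|Hci].
    - assert (H1 := Hwneg' c Hci). fold a in H1. change (q T' a < 0) in H1.
      split. intro Hz0. assert (q T' y = 0) by (unfold q; rewrite Hz0, ip0r; auto). lra. lra.
    - assert (Ha0 : a = z0).
      { apply lc_zero. intros i Hi. apply NNPP; intro; apply Hci; exists i; auto. }
      split.
      + intro Hy. rewrite Hyab, Ha0 in Hy. replace (add z0 b) with b in Hy by vecsolve.
        destruct Hc as [i [Hi Hci']]. destruct (Compare_dec.le_lt_dec n' i).
        * apply Hci'. replace i with (n' + (i - n'))%nat by lia. apply (Hzind' _ Hy). lia.
        * apply Hci. exists i; auto.
      + rewrite Hqy. unfold q. rewrite Ha0, lin_zero, ip0r by apply HT'. lra. }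
  destruct Hy0 as [Hy0 Hqy0].
  set (x := p2 y).
  assert (Hpy : p1 y = y) by (apply (pr_id V' p1 HV' Hp1); auto).
  assert (HxS : Sp T V n d w z x).
  { split. apply (pr_in V p2 Hp2). intros i Hi. unfold x. rewrite (pr_sa V p2 Hp2).
    apply Horth. apply in_map_iff. exists i. split; auto. apply in_seq. lia. }
  assert (Hd : hnorm (hsub x y) <= eps * hnorm y).
  { rewrite hnorm_subC. rewrite <- Hpy at 1. unfold x. apply (opn _ _ Hpd y). }
  assert (H1 := Hbeta x HxS).
  assert (H2 := pert_form T M eps y x (proj1 HT) HTs HM HMb ltac:(lra) Hd).
  assert (H3 := pert_op T' T eps y (opn _ _ Hop) ltac:(lra)).
  assert (Hnx : hnorm y / 2 <= hnorm x).
  { assert (H4 := hnorm_rev y x). rewrite hnorm_subC in H4. assert (eps * hnorm y <= hnorm y / 2).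
    generalize (hnorm_ge0 y); nra. lra. }
  assert (Hnx2 : nn y / 4 <= nn x).
  { rewrite <- !hnorm_sq. assert (H0 := hnorm_ge0 y). nra. }
  assert (Hny := nn_pos_of y Hy0).
  assert (3 * M * eps * nn y + eps * nn y <= beta / 8 * nn y).
  { replace (3 * M * eps * nn y + eps * nn y) with (((3 * M + 1) * eps) * nn y) by ring.
    apply Rmult_le_compat_r; lra. }
  assert (beta * (nn y / 4) <= beta * nn x) by (apply Rmult_le_compat_l; lra).
  assert (0 < beta * nn y) by (apply Rmult_lt_0_compat; auto).
  lra.
Qed.
End P3.

Lemma pow_dec r N j : 0 <= r <= 1 -> r ^ (N + j) <= r ^ N.
Proof.
  intros Hr. induction j. rewrite Nat.add_0_r. lra.
  rewrite Nat.add_succ_r. simpl. assert (0 <= r ^ (N + j)) by (apply pow_le; lra). nra.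
Qed.

Section LaxM.
Context {E : RHilbert}.
Notation ip := (hinner E).
Notation add := (hadd E).
Notation sc := (hscal E).
Notation op := (hopp E).
Notation z0 := (hzero E).

Variables (W : E -> Prop) (A : E -> E) (beta M : R).
Hypothesis HW : closed_subspace W.
Hypothesis HAl : is_linear A.
Hypothesis HAW : forall x, W x -> W (A x).
Hypothesis Hb : 0 < beta.
Hypothesis HM : beta <= M.
Hypothesis HAM : forall x, hnorm (A x) <= M * hnorm x.
Hypothesis Hco : forall x, W x -> beta * nn x <= ip (A x) x.

Let HWs : subspace W := cs_sub W HW.
Definition tt := beta / (M * M).
Definition rho := 1 - beta * beta / (M * M).
Definition rr := sqrt rho.

Lemma rho_bounds : 0 <= rho < 1.
Proof.
  unfold rho. split.
  - assert (beta * beta / (M * M) <= 1). { apply Rmult_le_reg_r with (M * M). nra.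
      unfold Rdiv. rewrite Rmult_assoc, Rinv_l by nra. nra. }
    lra.
  - assert (0 < beta * beta / (M * M)) by (apply Rdiv_lt_0_compat; nra). lra.
Qed.
Lemma rr_bounds : 0 <= rr < 1.
Proof.
  unfold rr. destruct rho_bounds. split. apply sqrt_pos.
  rewrite <- sqrt_1. apply sqrt_lt_1; lra.
Qed.

Lemma contr a : W a -> hnorm (hsub a (sc tt (A a))) <= rr * hnorm a.
Proof.
  intro Ha. unfold rr, hnorm. rewrite <- sqrt_mult_alt by (destruct rho_bounds; lra).
  apply sqrt_le_1_alt.
  ipsimpl. rewrite (hinner_sym E a (A a)).
  assert (H1 := Hco a Ha). assert (H2 := HAM a).
  assert (H3 : nn (A a) <= M * M * nn a).
  { rewrite <- !hnorm_sq. assert (H0 := hnorm_ge0 (A a)). nra. }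
  unfold nn in *. unfold tt, rho.
  assert (Ht : 0 <= beta / (M * M)) by (apply Rlt_le, Rdiv_lt_0_compat; nra).
  assert (H4 : beta / (M * M) * (beta / (M * M)) * ip (A a) (A a) <= beta / (M * M) * (beta / (M * M)) * (M * M * ip a a)).
  { apply Rmult_le_compat_l; nra. }
  assert (H5 : beta / (M * M) * (beta / (M * M)) * (M * M * ip a a) = beta * beta / (M * M) * ip a a)
    by (field; nra).
  assert (H6 : beta / (M * M) * ip (A a) a >= beta / (M * M) * (beta * ip a a)) by (apply Rle_ge, Rmult_le_compat_l; nra).
  assert (H7 : beta / (M * M) * (beta * ip a a) = beta * beta / (M * M) * ip a a) by (field; nra).
  nra.
Qed.

Variable y : E.
Hypothesis Hy : W y.

Definition Phi (x : E) : E := hsub x (sc tt (hsub (A x) y)).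
Lemma Phi_W x : W x -> W (Phi x).
Proof. intro Hx. unfold Phi. apply sub_sub; auto. apply HWs. apply sub_sub; auto. Qed.
Lemma Phi_lip a b : W a -> W b -> hnorm (hsub (Phi a) (Phi b)) <= rr * hnorm (hsub a b).
Proof.
  intros Ha Hb'. replace (hsub (Phi a) (Phi b)) with (hsub (hsub a b) (sc tt (A (hsub a b)))).
  apply contr. apply sub_sub; auto.
  unfold Phi. rewrite lin_sub by auto. vecsolve.
Qed.

Fixpoint it (k : nat) : E := match k with O => z0 | S k' => Phi (it k') end.
Lemma it_W k : W (it k).
Proof. induction k; simpl. apply HWs. apply Phi_W; auto. Qed.

Definition DD := hnorm (hsub (it 1) (it 0)).
Lemma it_step k : hnorm (hsub (it (S k)) (it k)) <= rr ^ k * DD.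
Proof.
  induction k. simpl. unfold DD. simpl. lra.
  change (it (S (S k))) with (Phi (it (S k))). change (it (S k)) with (Phi (it k)) at 2.
  eapply Rle_trans. apply Phi_lip; apply it_W. simpl.
  destruct rr_bounds. rewrite Rmult_assoc. apply Rmult_le_compat_l; auto.
Qed.
Lemma it_span k i : hnorm (hsub (it (k + i)) (it k)) <= DD * (rr ^ k - rr ^ (k + i)) / (1 - rr).
Proof.
  destruct rr_bounds. induction i.
  - rewrite Nat.add_0_r. replace (hsub (it k) (it k)) with z0 by vecsolve. rewrite hnorm0.
    replace (rr ^ k - rr ^ k) with 0 by ring. unfold Rdiv. rewrite Rmult_0_r, Rmult_0_l. lra.
  - rewrite Nat.add_succ_r. eapply Rle_trans. apply hnorm_tri_sub with (y := it (k + i)).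
    assert (H1 := it_step (k + i)).
    apply Rle_trans with (rr ^ (k + i) * DD + DD * (rr ^ k - rr ^ (k + i)) / (1 - rr)). lra.
    right. simpl. field. lra.
Qed.

Lemma DD_ge0 : 0 <= DD. Proof. apply hnorm_ge0. Qed.

Lemma it_bound N k : (N <= k)%nat -> hnorm (hsub (it k) (it N)) <= DD * rr ^ N / (1 - rr).
Proof.
  intro H. replace k with (N + (k - N))%nat by lia. eapply Rle_trans. apply it_span.
  destruct rr_bounds. assert (0 <= rr ^ (N + (k - N))) by (apply pow_le; lra).
  unfold Rdiv. apply Rmult_le_compat_r. apply Rlt_le, Rinv_0_lt_compat; lra.
  assert (Hdd := DD_ge0). nra.
Qed.

Lemma solve_exists : exists x, W x /\ A x = y.
Proof.
  destruct rr_bounds as [Hr0 Hr1].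
  assert (Hcau : forall eps, 0 < eps -> exists N, forall m k, (N <= m)%nat -> (N <= k)%nat ->
     hnorm (hsub (it m) (it k)) < eps).
  { intros eps Heps.
    destruct (pow_lt_1_zero rr ltac:(rewrite Rabs_right; lra) (eps * (1 - rr) / (2 * (DD + 1)))) as [N HN].
    { apply Rdiv_lt_0_compat. nra. generalize DD_ge0; lra. }
    exists N. intros m k Hm Hk. specialize (HN N (le_n _)). rewrite Rabs_right in HN by (apply Rle_ge, pow_le; lra).
    eapply Rle_lt_trans. apply hnorm_tri_sub with (y := it N).
    rewrite (hnorm_subC (it N)).
    assert (H1 := it_bound N m Hm). assert (H2 := it_bound N k Hk).
    assert (DD * rr ^ N / (1 - rr) < eps / 2).
    { apply Rmult_lt_reg_r with (1 - rr). lra. unfold Rdiv. rewrite Rmult_assoc, Rinv_l by lra.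
      assert (H3 := DD_ge0). assert (0 <= rr ^ N) by (apply pow_le; lra).
      assert (rr ^ N * (2 * (DD + 1)) < eps * (1 - rr)).
      { apply Rmult_lt_reg_r with (/ (2 * (DD + 1))). apply Rinv_0_lt_compat; lra.
        rewrite Rmult_assoc, Rinv_r by lra. lra. }
      nra. }
    lra. }
  destruct (cauchy_conv it Hcau) as [x Hx].
  assert (HxW : W x) by (apply HW with it; auto; apply it_W).
  exists x. split; auto.
  assert (Hfix : hnorm (hsub (Phi x) x) = 0).
  { apply Rle_antisym. 2: apply hnorm_ge0. apply Rnot_lt_le. intro Hpos.
    set (e := hnorm (hsub (Phi x) x)) in *.
    destruct (Hx (e / 2)) as [N HN]. lra.
    assert (H1 := HN N (le_n _)). assert (H2 := HN (S N) (le_S _ _ (le_n _))).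
    assert (H3 := hnorm_tri_sub (Phi x) (Phi (it N)) x).
    assert (H4 := Phi_lip x (it N) HxW (it_W N)). rewrite hnorm_subC in H4.
    change (Phi (it N)) with (it (S N)) in H3, H4.
    fold e in H3. rewrite (hnorm_subC (Phi x)) in H3. rewrite (hnorm_subC x) in H4.
    assert (H5 := hnorm_ge0 (hsub (it N) x)). nra. }
  apply hnorm_eq0 in Hfix.
  assert (Htt : 0 < tt) by (apply Rdiv_lt_0_compat; nra).
  apply vec_ext; intro v. assert (H1 := f_equal (fun u => ip u v) Hfix). simpl in H1.
  unfold Phi in H1. ipsimpl_in H1.
  assert (tt * (ip (A x) v - ip y v) = 0) by lra.
  apply Rmult_integral in H. destruct H; lra.
Qed.
End LaxM.

Section LaxM2.
Context {E : RHilbert}.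
Notation ip := (hinner E).
Notation add := (hadd E).
Notation sc := (hscal E).
Notation op := (hopp E).
Notation z0 := (hzero E).

Lemma lax_milgram (W : E -> Prop) (pw A : E -> E) (beta : R) : closed_subspace W -> is_orth_proj W pw ->
  bounded_op A -> (forall x, W x -> W (A x)) -> 0 < beta ->
  (forall x, W x -> beta * nn x <= ip (A x) x) ->
  exists Q, bounded_op Q /\ (forall x, W x -> W (Q x)) /\ (forall x, W x -> A (Q x) = x /\ Q (A x) = x).
Proof.
  intros HW Hpw HA HAW Hb Hco.
  assert (HWs := cs_sub W HW).
  destruct (bnd A HA) as [M0 [HM0 HAM]].
  assert (HAM' : forall x, hnorm (A x) <= (M0 + beta) * hnorm x).
  { intro x. specialize (HAM x). assert (H := hnorm_ge0 x). nra. }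
  assert (Hex : forall v, exists x, W x /\ A x = pw v).
  { intro v. apply (solve_exists W A beta (M0 + beta) HW (proj1 HA) HAW Hb ltac:(lra) HAM' Hco).
    apply (pr_in W pw Hpw). }
  set (Q := fun v => proj1_sig (constructive_indefinite_description _ (Hex v))).
  assert (HQ : forall v, W (Q v) /\ A (Q v) = pw v).
  { intro v. unfold Q. destruct (constructive_indefinite_description _ (Hex v)); auto. }
  assert (Huniq : forall a b, W a -> W b -> A a = A b -> a = b).
  { intros a b Ha Hb' Hab. assert (Hd : W (hsub a b)) by (apply sub_sub; auto).
    assert (H := Hco _ Hd). rewrite lin_sub, Hab in H by apply HA.
    replace (hsub (A b) (A b)) with z0 in H by vecsolve. rewrite ip0l in H.
    assert (nn (hsub a b) = 0) by (generalize (nn_ge0 (hsub a b)); nra).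
    apply nn_eq0 in H0. apply vec_ext; intro v. assert (H1 := f_equal (fun u => ip u v) H0). simpl in H1.
    ipsimpl_in H1. lra. }
  assert (Hpl := pr_lin W pw HWs Hpw).
  assert (HQl : is_linear Q).
  { split.
    - intros a b. apply Huniq. apply HQ. apply (proj1 (proj2 HWs)); apply HQ.
      rewrite (lin_add A) by apply HA. rewrite !(proj2 (HQ _)). rewrite lin_add; auto.
    - intros c a. apply Huniq. apply HQ. apply (proj2 (proj2 HWs)); apply HQ.
      rewrite (lin_sc A) by apply HA. rewrite !(proj2 (HQ _)). rewrite lin_sc; auto. }
  exists Q. split; [split|split].
  - auto.
  - exists (/ beta). intro v. destruct (HQ v) as [HQW HQA].
    assert (H1 := Hco _ HQW). rewrite HQA in H1.
    assert (H2 := cs1 (pw v) (Q v)). assert (H3 := pr_norm W pw Hpw v).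
    rewrite <- hnorm_sq in H1. assert (H4 := hnorm_ge0 (Q v)). assert (H5 := hnorm_ge0 (pw v)).
    assert (H6 : beta * hnorm (Q v) <= hnorm v).
    { destruct (Rle_lt_or_eq_dec _ _ H4) as [Hlt|Heq].
      - apply Rmult_le_reg_r with (hnorm (Q v)); auto. nra.
      - rewrite <- Heq. generalize (hnorm_ge0 v); lra. }
    apply Rmult_le_reg_l with beta; auto. rewrite <- Rmult_assoc, Rinv_r, Rmult_1_l by lra. auto.
  - intros; apply HQ.
  - intros x Hx. split.
    + rewrite (proj2 (HQ x)). apply (pr_id W pw HWs Hpw); auto.
    + apply Huniq. apply HQ. auto. rewrite (proj2 (HQ _)). apply (pr_id W pw HWs Hpw); auto.
Qed.
End LaxM2.

Section P1.
Context {E : RHilbert}.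
Notation ip := (hinner E).
Notation add := (hadd E).
Notation sc := (hscal E).
Notation op := (hopp E).
Notation z0 := (hzero E).

Lemma part1 (T : E -> E) (V : E -> Prop) : in_A T V ->
     exists eps, 0 < eps /\
       forall (T' : E -> E) (V' : E -> Prop), is_Bs T' -> closed_subspace V' ->
         opnorm_lt (fun x => hsub (T' x) (T x)) eps -> gdist_lt V' V eps ->
         in_A T' V'.
Proof.
  intros HA. destruct (setup T V HA) as [P [K [alpha HS]]].
  assert (HT := st_T _ _ _ _ _ HS). assert (HTs := st_Tsym _ _ _ _ _ HS).
  assert (HVc := st_V _ _ _ _ _ HS). assert (HV := cs_sub V HVc).
  assert (Ha := st_alpha _ _ _ _ _ HS). assert (HK := st_K _ _ _ _ _ HS).
  destruct (bnd T HT) as [M [HM HMb]].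
  set (eps := Rmin (1/2) (alpha / (8 * (3 * M + 1)))).
  assert (He1 : eps <= 1/2) by apply Rmin_l.
  assert (He2 : eps <= alpha / (8 * (3 * M + 1))) by apply Rmin_r.
  assert (He0 : 0 < eps). { apply Rmin_glb_lt. lra. apply Rdiv_lt_0_compat; lra. }
  assert (He3 : (3 * M + 1) * eps <= alpha / 8).
  { apply Rmult_le_reg_l with (/ (3 * M + 1)). apply Rinv_0_lt_compat; lra.
    rewrite <- Rmult_assoc, Rinv_l, Rmult_1_l by lra. eapply Rle_trans. apply He2.
    right. field. lra. }
  exists eps. split; auto.
  intros T' V' HT' HV'c Hop [p1 [p2 [Hp1 [Hp2 Hpd]]]].
  assert (HV' := cs_sub V' HV'c).
  assert (Hp1b := pr_bnd V' p1 HV' Hp1). assert (Hp2b := pr_bnd V p2 HV Hp2).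
  assert (Hp1l := proj1 Hp1b). assert (Hp2l := proj1 Hp2b).
  assert (HKl := proj1 HK). assert (HT'l := proj1 (proj1 HT')). assert (HT's := proj2 HT').
  set (P' := fun x => p1 (hsub (T' (p1 x)) (K (p2 (p1 x))))).
  set (K' := fun x => p1 (K (p2 (p1 x)))).
  assert (HKx : forall a b, ip (K (p2 a)) b = ip (K (p2 a)) (p2 b)).
  { intros a b. rewrite <- (pr_id V p2 HV Hp2 (K (p2 a))) at 1. apply (pr_sa V p2 Hp2).
    apply (st_KV _ _ _ _ _ HS). apply (pr_in V p2 Hp2). }
  assert (HKp : forall a b, ip (K (p2 a)) b = ip a (K (p2 b))).
  { intros a b. rewrite HKx. rewrite (st_Ksym _ _ _ _ _ HS) by apply (pr_in V p2 Hp2).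
    rewrite (pr_sa V p2 Hp2). rewrite (pr_id V p2 HV Hp2); auto. apply (st_KV _ _ _ _ _ HS). apply (pr_in V p2 Hp2). }
  assert (Hp1ip : forall u x, V' x -> ip (p1 u) x = ip u x).
  { intros u x Hx. rewrite (pr_sa V' p1 Hp1), (pr_id V' p1 HV' Hp1); auto. }
  assert (HP'ip : forall x y, V' x -> V' y -> ip (P' x) y = ip (T' x) y - ip (K (p2 x)) y).
  { intros x y Hx Hy. unfold P'. rewrite Hp1ip by auto. rewrite (pr_id V' p1 HV' Hp1 x Hx). apply ip_subl. }
  assert (Hcoer : forall x, V' x -> alpha / 8 * nn x <= ip (P' x) x).
  { intros x Hx. rewrite HP'ip by auto. rewrite HKx.
    set (x0 := p2 x). assert (Hx0 : V x0) by apply (pr_in V p2 Hp2).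
    assert (Hd : hnorm (hsub x0 x) <= eps * hnorm x).
    { rewrite hnorm_subC. rewrite <- (pr_id V' p1 HV' Hp1 x Hx) at 1. apply (opn _ _ Hpd x). }
    assert (H1 := pert_form T M eps x x0 (proj1 HT) HTs HM HMb ltac:(lra) Hd).
    assert (H2 := pert_op T' T eps x (opn _ _ Hop) ltac:(lra)).
    assert (H3 := st_dec _ _ _ _ _ HS x0 x0 Hx0 Hx0).
    assert (H4 := st_coer _ _ _ _ _ HS x0 Hx0).
    assert (Hnx : hnorm x / 2 <= hnorm x0).
    { assert (H5 := hnorm_rev x x0). rewrite hnorm_subC in H5. assert (eps * hnorm x <= hnorm x / 2).
      generalize (hnorm_ge0 x); nra. lra. }
    assert (Hnx2 : nn x / 4 <= nn x0).
    { rewrite <- !hnorm_sq. assert (H0 := hnorm_ge0 x). nra. }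
    assert (3 * M * eps * nn x + eps * nn x <= alpha / 8 * nn x).
    { replace (3 * M * eps * nn x + eps * nn x) with (((3 * M + 1) * eps) * nn x) by ring.
      apply Rmult_le_compat_r. apply nn_ge0. lra. }
    assert (alpha * (nn x / 4) <= alpha * nn x0) by (apply Rmult_le_compat_l; lra).
    unfold q in *. lra. }
  assert (HP'b : bounded_op P').
  { apply (bnd_comp p1 (fun x => hsub (T' (p1 x)) (K (p2 (p1 x))))); auto.
    apply (bnd_sub (fun x => T' (p1 x)) (fun x => K (p2 (p1 x)))).
    apply bnd_comp; auto. apply HT'. apply bnd_comp; auto. apply bnd_comp; auto. }
  assert (HK'b : bounded_op K').
  { apply (bnd_comp p1 (fun x => K (p2 (p1 x)))); auto. apply bnd_comp; auto. apply bnd_comp; auto. }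
  assert (HP'V : forall x, V' x -> V' (P' x)) by (intros; apply (pr_in V' p1 Hp1)).
  destruct (lax_milgram V' p1 P' (alpha / 8) HV'c Hp1 HP'b HP'V ltac:(lra) Hcoer) as [Q' [HQ'b [HQ'V HQ']]].
  split; [exact HT'|split; [exact HV'c|]].
  exists P', K'. split; [auto|split; [auto|split; [auto|split; [|split; [|split; [|split; [|split]]]]]]].
  - intros; apply (pr_in V' p1 Hp1).
  - intros x y Hx Hy. rewrite HP'ip by auto. rewrite (hinner_sym E x (P' y)), HP'ip by auto.
    rewrite HT's, HKp. rewrite (hinner_sym E (T' y) x), (hinner_sym E (K (p2 y)) x). ring.
  - exists Q'. split; auto.
  - intros x Hx Hx0. assert (H := Hcoer x Hx). assert (H1 := nn_pos_of x Hx0).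
    assert (0 < alpha / 8 * nn x) by (apply Rmult_lt_0_compat; lra). lra.
  - intros u Hu [B HB].
    destruct (st_Kc _ _ _ _ _ HS (fun n => p2 (p1 (u n)))) as [phi [Hphi [l Hl]]].
    { intros; apply (pr_in V p2 Hp2). }
    { exists B. intro n. eapply Rle_trans. apply (pr_norm V p2 Hp2). eapply Rle_trans. apply (pr_norm V' p1 Hp1). auto. }
    exists phi. split; auto. exists (p1 l). intros e He. destruct (Hl e He) as [N HN]. exists N.
    intros m Hm. specialize (HN m Hm). cbv beta in *. unfold K'.
    rewrite <- (lin_sub p1) by auto. eapply Rle_lt_trans. apply (pr_norm V' p1 Hp1). auto.
  - intros x y Hx Hy. unfold P', K'.
    replace (add (p1 (hsub (T' (p1 x)) (K (p2 (p1 x))))) (p1 (K (p2 (p1 x))))) with (p1 (T' (p1 x))).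
    rewrite Hp1ip by auto. rewrite (pr_id V' p1 HV' Hp1 x Hx). auto.
    rewrite <- (lin_add p1) by auto. f_equal. vecsolve.
Qed.
End P1.

Theorem mainTheorem15 (E : RHilbert) :
  (* A is open in B_s(H) x G(H) *)
  (forall (T : E -> E) (V : E -> Prop), in_A T V ->
     exists eps, 0 < eps /\
       forall (T' : E -> E) (V' : E -> Prop), is_Bs T' -> closed_subspace V' ->
         opnorm_lt (fun x => hsub (T' x) (T x)) eps -> gdist_lt V' V eps ->
         in_A T' V')
  /\
  (* on A, n_- and dim Ker are finite, so both maps are N-valued *)
  (forall (T : E -> E) (V : E -> Prop), in_A T V ->
     (exists n, n_minus_eq T V n) /\ (exists d, ker_dim_eq T V d))
  /\
  (* n_- + dim Ker is upper semicontinuous on A *)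
  (forall (T : E -> E) (V : E -> Prop) (n d : nat), in_A T V ->
     n_minus_eq T V n -> ker_dim_eq T V d ->
     exists eps, 0 < eps /\
       forall (T' : E -> E) (V' : E -> Prop) (n' d' : nat), in_A T' V' ->
         opnorm_lt (fun x => hsub (T' x) (T x)) eps -> gdist_lt V' V eps ->
         n_minus_eq T' V' n' -> ker_dim_eq T' V' d' -> (n' + d' <= n + d)%nat)
  /\
  (* n_- is lower semicontinuous on A *)
  (forall (T : E -> E) (V : E -> Prop) (n : nat), in_A T V ->
     n_minus_eq T V n ->
     exists eps, 0 < eps /\
       forall (T' : E -> E) (V' : E -> Prop) (n' : nat), in_A T' V' ->
         opnorm_lt (fun x => hsub (T' x) (T x)) eps -> gdist_lt V' V eps ->
         n_minus_eq T' V' n' -> (n <= n')%nat).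
Proof.
  split; [|split; [|split]].
  - apply part1.
  - apply part2.
  - apply part3.
  - apply part4.
Qed.
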